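(* Let $\Phi:\{0,1\}^\omega\to\{0,1\}^\omega$ be a computable injection and let $b$ be a computable $\Phi$-martingale. Then for every $\sigma$ the limit $$b'(\sigma)=\lim_{n\to\infty}\sum_{\tau\in\{0,1\}^n} b(\tau)\,\frac{\mu([\sigma]\cap\Phi^{-1}([\tau]))}{\mu([\sigma])}$$ exists, and $b'$ is a total computable martingale (with respect to $\mu$).
   Context: $\mu$ is the uniform (fair-coin) measure on $\{0,1\}^\omega$ and $[\tau]$ the set of sequences extending $\tau$. For a computable $\Phi$, a $\Phi$-martingale is a function $b:\{0,1\}^{<\omega}\to\mathbb{R}_{\ge0}$ with $b(\tau)\mu(\Phi^{-1}[\tau])=b(\tau0)\mu(\Phi^{-1}[\tau0])+b(\tau1)\mu(\Phi^{-1}[\tau1])$ for all $\tau$; it is computable if $b(\tau)$ is a computable real uniformly in $\tau$. A (total) martingale is $m:\{0,1\}^{<\omega}\to\mathbb{R}_{\ge0}$ with $m(\sigma0)+m(\sigma1)=2m(\sigma)$. *)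

(* Defs.v *)
From Stdlib Require Import Reals Lra Lia Arith List ClassicalEpsilon.
Import ListNotations.
Open Scope R_scope.

Inductive code : Type :=
| CZero : code
| CSucc : code
| CProj : nat -> code
| CComp : code -> list code -> code
| CPrim : code -> code -> code
| CMu   : code -> code.

Inductive eval : code -> list nat -> nat -> Prop :=
| ev_zero : forall xs, eval CZero xs 0
| ev_succ : forall xs, eval CSucc xs (S (hd 0%nat xs))
| ev_proj : forall i xs, eval (CProj i) xs (nth i xs 0%nat)
| ev_comp : forall f gs xs ys y,
    evals gs xs ys -> eval f ys y -> eval (CComp f gs) xs y
| ev_prim0 : forall f g xs y,
    eval f xs y -> eval (CPrim f g) (0%nat :: xs) y
| ev_primS : forall f g n xs z y,
    eval (CPrim f g) (n :: xs) z -> eval g (n :: z :: xs) y ->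
    eval (CPrim f g) (S n :: xs) y
| ev_mu : forall f xs n,
    eval f (n :: xs) 0%nat ->
    (forall m, (m < n)%nat -> exists k, eval f (m :: xs) (S k)) ->
    eval (CMu f) xs n
with evals : list code -> list nat -> list nat -> Prop :=
| evs_nil : forall xs, evals [] xs []
| evs_cons : forall g gs xs y ys,
    eval g xs y -> evals gs xs ys -> evals (g :: gs) xs (y :: ys).

Definition computable_fun (f : nat -> nat) : Prop :=
  exists c : code, forall n : nat, eval c [n] (f n).

Definition npair (a b : nat) : nat := ((a + b) * (a + b + 1) / 2 + b)%nat.

Fixpoint enc_bits (s : list bool) : nat :=
  match s with
  | [] => 0%nat
  | b :: s' => (2 * enc_bits s' + (if b then 2 else 1))%nat
  end.

Definition cantor := nat -> bool.

Definition ext (X : cantor) (tau : list bool) : Prop :=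
  forall i : nat, (i < length tau)%nat -> X i = nth i tau false.

Definition restr (X : cantor) (n : nat) : list bool := map X (seq 0 n).

Fixpoint all_strings (n : nat) : list (list bool) :=
  match n with
  | O => [[]]
  | S n' => flat_map (fun s => [false :: s; true :: s]) (all_strings n')
  end.

Definition sumR {A : Type} (l : list A) (f : A -> R) : R :=
  fold_right (fun a acc => f a + acc) 0 l.

(** For clopen A (all sets to which mu is applied in
    the statement, since a computable Phi is continuous) this is the
    fair-coin measure of A. *)
Definition indic (P : Prop) : R :=
  if excluded_middle_informative P then 1 else 0.

Definition inner (n : nat) (A : cantor -> Prop) : R :=
  sumR (all_strings n)
    (fun rho => indic (forall X, ext X rho -> A X) * (/ 2) ^ n).

Definition mu (A : cantor -> Prop) : R :=
  epsilon (inhabits 0) (fun r => is_lub (fun x => exists n, x = inner n A) r).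

(** Phi : 2^omega -> 2^omega is computable (a total Turing functional):
    there is a computable h such that h(<sigma,m>) is either 2 ("not yet
    determined using oracle prefix sigma") or the m-th bit of Phi(X) for every
    X extending sigma, and for every X and m some prefix of X determines it. *)
Definition computable_functional (Phi : cantor -> cantor) : Prop :=
  exists h : nat -> nat,
    computable_fun h /\
    (forall (X : cantor) (m : nat),
        (exists n, h (npair (enc_bits (restr X n)) m) <> 2%nat) /\
        (forall n, h (npair (enc_bits (restr X n)) m) <> 2%nat ->
                   h (npair (enc_bits (restr X n)) m) = (if Phi X m then 1 else 0)%nat)).

Definition computable_real_fun (b : list bool -> R) : Prop :=
  exists g : nat -> nat,
    computable_fun g /\
    (forall (tau : list bool) (k : nat),
        exists a c : nat,
          g (npair (enc_bits tau) k) = npair a c /\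
          Rabs (b tau - (INR a - INR c) / 2 ^ k) <= (/ 2) ^ k).

Definition preim (Phi : cantor -> cantor) (tau : list bool) : cantor -> Prop :=
  fun X => ext (Phi X) tau.

Definition Phi_martingale (Phi : cantor -> cantor) (b : list bool -> R) : Prop :=
  (forall tau, 0 <= b tau) /\
  (forall tau,
      b tau * mu (preim Phi tau) =
      b (tau ++ [false]) * mu (preim Phi (tau ++ [false])) +
      b (tau ++ [true]) * mu (preim Phi (tau ++ [true])) ).

Definition martingale (m : list bool -> R) : Prop :=
  (forall sigma, 0 <= m sigma) /\
  (forall sigma, m (sigma ++ [false]) + m (sigma ++ [true]) = 2 * m sigma).

Definition injective_cantor (Phi : cantor -> cantor) : Prop :=
  forall X Y : cantor, (forall n, Phi X n = Phi Y n) -> forall n, X n = Y n.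

(* Main.v *)
Require Import Defs.
From Stdlib Require Import Reals Lra Lia Arith List ClassicalEpsilon Classical FunctionalExtensionality PropExtensionality.
Import ListNotations.

Module Part_Comp.

Definition env := nat -> nat.
Definition econs (a : nat) (r : env) : env := fun i => match i with 0 => a | S j => r j end.
Definition envl (xs : list nat) : env := fun i => nth i xs 0%nat.

Definition Cmp (f : env -> nat) : Prop :=
  forall k, exists c, forall xs, length xs = k -> eval c xs (f (envl xs)).

Lemma C_ext f g : Cmp f -> (forall r, f r = g r) -> Cmp g.
Proof.
  intros H E k. destruct (H k) as [c Hc]. exists c. intros xs L. rewrite <- E. auto.
Qed.

Lemma C_var i : Cmp (fun r => r i).
Proof. intros k. exists (CProj i). intros xs _. constructor. Qed.

Lemma C_zero : Cmp (fun _ => 0%nat).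
Proof. intros k. exists CZero. intros xs _. constructor. Qed.

Lemma C_succ f : Cmp f -> Cmp (fun r => S (f r)).
Proof.
  intros H k. destruct (H k) as [c Hc]. exists (CComp CSucc [c]). intros xs L.
  eapply ev_comp. constructor. apply Hc. exact L. constructor. constructor.
Qed.

Lemma C_const n : Cmp (fun _ => n).
Proof. induction n. apply C_zero. apply (C_succ (fun _ => n)). auto. Qed.

Lemma C_comp_list (gs : list (env -> nat)) : Forall Cmp gs -> forall k, exists cs,
  forall xs, length xs = k -> evals cs xs (map (fun g => g (envl xs)) gs).
Proof.
  induction 1; intros k.
  - exists []. intros. constructor.
  - destruct (H k) as [c Hc]. destruct (IHForall k) as [cs Hcs].
    exists (c :: cs). intros xs L. simpl. constructor; auto.
Qed.

Lemma C_comp f gs : Cmp f -> Forall Cmp gs -> Cmp (fun r => f (envl (map (fun g => g r) gs))).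
Proof.
  intros Hf Hgs k. destruct (C_comp_list gs Hgs k) as [cs Hcs].
  destruct (Hf (length gs)) as [cf Hcf].
  exists (CComp cf cs). intros xs L. econstructor. apply Hcs; auto.
  apply Hcf. rewrite length_map; auto.
Qed.

Lemma C_comp1 (u : nat -> nat) f : Cmp (fun r => u (r 0%nat)) -> Cmp f -> Cmp (fun r => u (f r)).
Proof.
  intros Hu Hf. eapply C_ext. apply (C_comp _ [f] Hu). repeat constructor; auto.
  intros r. reflexivity.
Qed.

Lemma C_comp2 (u : nat -> nat -> nat) f g : Cmp (fun r => u (r 0%nat) (r 1%nat)) -> Cmp f -> Cmp g ->
  Cmp (fun r => u (f r) (g r)).
Proof.
  intros Hu Hf Hg. eapply C_ext. apply (C_comp _ [f; g] Hu). repeat constructor; auto.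
  intros r. reflexivity.
Qed.

Lemma C_comp3 (u : nat -> nat -> nat -> nat) f g h : Cmp (fun r => u (r 0%nat) (r 1%nat) (r 2%nat)) -> Cmp f -> Cmp g -> Cmp h ->
  Cmp (fun r => u (f r) (g r) (h r)).
Proof.
  intros Hu Hf Hg Hh. eapply C_ext. apply (C_comp _ [f; g; h] Hu). repeat constructor; auto.
  intros r. reflexivity.
Qed.

Lemma C_comp4 (u : nat -> nat -> nat -> nat -> nat) f g h j :
  Cmp (fun r => u (r 0%nat) (r 1%nat) (r 2%nat) (r 3%nat)) -> Cmp f -> Cmp g -> Cmp h -> Cmp j ->
  Cmp (fun r => u (f r) (g r) (h r) (j r)).
Proof.
  intros Hu Hf Hg Hh Hj. eapply C_ext. apply (C_comp _ [f; g; h; j] Hu). repeat constructor; auto.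
  intros r. reflexivity.
Qed.

Lemma C_comp5 (u : nat -> nat -> nat -> nat -> nat -> nat) f g h j l :
  Cmp (fun r => u (r 0%nat) (r 1%nat) (r 2%nat) (r 3%nat) (r 4%nat)) -> Cmp f -> Cmp g -> Cmp h -> Cmp j -> Cmp l ->
  Cmp (fun r => u (f r) (g r) (h r) (j r) (l r)).
Proof.
  intros Hu Hf Hg Hh Hj Hl. eapply C_ext. apply (C_comp _ [f; g; h; j; l] Hu). repeat constructor; auto.
  intros r. reflexivity.
Qed.

Lemma evals_proj (l : list nat) xs : evals (map CProj l) xs (map (fun i => nth i xs 0%nat) l).
Proof. induction l; simpl; constructor; auto. constructor. Qed.

Lemma map_nth_seq_id (xs : list nat) : map (fun i => nth i xs 0%nat) (seq 0 (length xs)) = xs.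
Proof.
  induction xs as [|a xs IH]; simpl; auto. f_equal.
  rewrite <- seq_shift, map_map. simpl. exact IH.
Qed.

Fixpoint primR (fb fs : env -> nat) (n : nat) (r : env) : nat :=
  match n with 0 => fb r | S n' => fs (econs n' (econs (primR fb fs n' r) r)) end.

Lemma C_prim fb fs fn : Cmp fb -> Cmp fs -> Cmp fn -> Cmp (fun r => primR fb fs (fn r) r).
Proof.
  intros Hb Hs Hn k.
  destruct (Hb k) as [cb Hcb]. destruct (Hs (S (S k))) as [cs Hcs]. destruct (Hn k) as [cn Hcn].
  exists (CComp (CPrim cb cs) (cn :: map CProj (seq 0 k))). intros xs L.
  econstructor. constructor. apply Hcn; auto. apply evals_proj.
  rewrite <- L, map_nth_seq_id.
  generalize (fn (envl xs)). intros n. induction n; simpl.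
  - constructor. apply Hcb; auto.
  - econstructor. apply IHn.
    replace (econs n (econs (primR fb fs n (envl xs)) (envl xs))) with
      (envl (n :: primR fb fs n (envl xs) :: xs)).
    apply Hcs. simpl; lia.
    apply functional_extensionality. intros [|[|i]]; reflexivity.
Qed.

Definition minz (p : nat -> nat) : nat :=
  epsilon (inhabits 0%nat) (fun n => p n = 0%nat /\ forall m, (m < n)%nat -> p m <> 0%nat).

Lemma least_ex (p : nat -> nat) n : p n = 0%nat -> exists l, p l = 0%nat /\ forall m, (m < l)%nat -> p m <> 0%nat.
Proof.
  induction n as [n IH] using lt_wf_ind. intros Hn.
  destruct (classic (exists m, (m < n)%nat /\ p m = 0%nat)) as [[m [Hm1 Hm2]]|Hno].
  - eapply IH; eauto.
  - exists n. split; auto. intros m Hm E. apply Hno. eauto.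
Qed.

Lemma minz_spec p : (exists n, p n = 0%nat) -> p (minz p) = 0%nat /\ forall m, (m < minz p)%nat -> p m <> 0%nat.
Proof.
  intros [n Hn]. unfold minz. apply epsilon_spec. eapply least_ex; eauto.
Qed.

Lemma minz_unique p n : p n = 0%nat -> (forall m, (m < n)%nat -> p m <> 0%nat) -> minz p = n.
Proof.
  intros H1 H2. destruct (minz_spec p) as [A B]. eauto.
  destruct (lt_eq_lt_dec (minz p) n) as [[Hl|He]|Hg]; auto.
  - exfalso; eapply H2; eauto.
  - exfalso; eapply B; eauto.
Qed.

Lemma C_min f : Cmp f -> (forall r, exists n, f (econs n r) = 0%nat) ->
  Cmp (fun r => minz (fun n => f (econs n r))).
Proof.
  intros Hf Tot k. destruct (Hf (S k)) as [c Hc]. exists (CMu c). intros xs L.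
  assert (E : forall n, envl (n :: xs) = econs n (envl xs)).
  { intros n. apply functional_extensionality. intros [|i]; reflexivity. }
  destruct (minz_spec (fun n => f (econs n (envl xs)))) as [A B]. apply Tot.
  constructor.
  - rewrite <- A, <- E. apply Hc. simpl; lia.
  - intros m Hm. specialize (B m Hm). simpl in B.
    destruct (f (econs m (envl xs))) as [|v] eqn:Ev. congruence.
    exists v. rewrite <- Ev, <- E. apply Hc. simpl; lia.
Qed.

Lemma C_ren B (rho : nat -> nat) : (forall k, exists m, forall i, (m <= i)%nat -> (k <= rho i)%nat) ->
  Cmp B -> Cmp (fun r => B (fun i => r (rho i))).
Proof.
  intros Hr HB k. destruct (Hr k) as [m Hm]. destruct (HB m) as [c Hc].
  exists (CComp c (map CProj (map rho (seq 0 m)))). intros xs L.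
  econstructor. apply evals_proj.
  replace (fun i => envl xs (rho i)) with (envl (map (fun i => nth i xs 0%nat) (map rho (seq 0 m)))).
  apply Hc. rewrite !length_map, length_seq; auto.
  apply functional_extensionality. intros i. unfold envl.
  destruct (Nat.lt_ge_cases i m).
  - rewrite map_map.
    rewrite nth_indep with (d' := nth (rho 0%nat) xs 0%nat) by (rewrite length_map, length_seq; auto).
    rewrite (map_nth (fun x => nth (rho x) xs 0%nat)). rewrite seq_nth; auto.
  - rewrite nth_overflow by (rewrite !length_map, length_seq; lia).
    rewrite nth_overflow; auto. specialize (Hm i H). lia.
Qed.

Lemma C_fun1 (h : nat -> nat) f : computable_fun h -> Cmp f -> Cmp (fun r => h (f r)).
Proof.
  intros [ch Hch] Hf k. destruct (Hf k) as [c Hc]. exists (CComp ch [c]). intros xs L.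
  econstructor. constructor. apply Hc; auto. constructor. apply Hch.
Qed.

Lemma C_shift1 B : Cmp B -> Cmp (fun r => B (fun j => r (S j))).
Proof.
  intros HB. apply (C_ren B S); auto. intros k. exists k. intros; lia.
Qed.

Lemma C_prim2 fb (fs : nat -> nat -> env -> nat) fn : Cmp fb ->
  Cmp (fun r => fs (r 0%nat) (r 1%nat) (fun j => r (S (S j)))) -> Cmp fn ->
  Cmp (fun r => primR fb (fun r' => fs (r' 0%nat) (r' 1%nat) (fun j => r' (S (S j)))) (fn r) r).
Proof. intros; apply C_prim; auto. Qed.

End Part_Comp.
Import Part_Comp.

Module Part_Comp2.

Lemma C_add f g : Cmp f -> Cmp g -> Cmp (fun r => (f r + g r)%nat).
Proof.
  intros Hf Hg. apply (C_comp2 Nat.add); auto.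
  eapply C_ext. apply (C_prim (fun r => r 1%nat) (fun r => S (r 1%nat)) (fun r => r 0%nat)).
  apply C_var. apply C_succ, C_var. apply C_var.
  intros r. simpl. induction (r 0%nat); simpl; auto.
Qed.

Lemma C_mul f g : Cmp f -> Cmp g -> Cmp (fun r => (f r * g r)%nat).
Proof.
  intros Hf Hg. apply (C_comp2 Nat.mul); auto.
  eapply C_ext. apply (C_prim (fun r => 0%nat) (fun r => r 1%nat + r 3%nat)%nat (fun r => r 0%nat)).
  apply C_zero. apply C_add; apply C_var. apply C_var.
  intros r. simpl. induction (r 0%nat); simpl; auto. rewrite IHn. lia.
Qed.

Lemma C_pred f : Cmp f -> Cmp (fun r => Nat.pred (f r)).
Proof.
  intros Hf. apply (C_comp1 Nat.pred); auto.
  eapply C_ext. apply (C_prim (fun r => 0%nat) (fun r => r 0%nat) (fun r => r 0%nat)).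
  apply C_zero. apply C_var. apply C_var.
  intros r. simpl. destruct (r 0%nat); simpl; auto.
Qed.

Lemma C_sub f g : Cmp f -> Cmp g -> Cmp (fun r => (f r - g r)%nat).
Proof.
  intros Hf Hg. apply (C_comp2 Nat.sub); auto.
  eapply C_ext. apply (C_prim (fun r => r 0%nat) (fun r => Nat.pred (r 1%nat)) (fun r => r 1%nat)).
  apply C_var. apply C_pred, C_var. apply C_var.
  intros r. simpl. induction (r 1%nat); simpl; auto. lia. rewrite IHn. lia.
Qed.

Lemma C_pow f g : Cmp f -> Cmp g -> Cmp (fun r => (f r ^ g r)%nat).
Proof.
  intros Hf Hg. apply (C_comp2 Nat.pow); auto.
  eapply C_ext. apply (C_prim (fun r => 1%nat) (fun r => r 1%nat * r 2%nat)%nat (fun r => r 1%nat)).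
  apply C_const. apply C_mul; apply C_var. apply C_var.
  intros r. simpl. induction (r 1%nat); simpl; auto. rewrite IHn. lia.
Qed.

Lemma C_minB (P : nat -> env -> nat) : Cmp (fun r => P (r 0%nat) (fun j => r (S j))) ->
  (forall r, exists n, P n r = 0%nat) -> Cmp (fun r => minz (fun n => P n r)).
Proof.
  intros H T. exact (C_min (fun r => P (r 0%nat) (fun j => r (S j))) H T).
Qed.

Lemma C_div f g : Cmp f -> Cmp g -> Cmp (fun r => (f r / g r)%nat).
Proof.
  intros Hf Hg. apply (C_comp2 Nat.div); auto.
  eapply C_ext.
  apply (C_minB (fun q r => r 1%nat * (S (r 0%nat) - S q * r 1%nat))%nat).
  apply C_mul. apply C_var. apply C_sub. apply C_succ, C_var. apply C_mul. apply C_succ, C_var. apply C_var.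
  intros r. exists (r 0%nat). destruct (r 1%nat); simpl. lia. nia.
  intros r. apply minz_unique.
  - destruct (r 1%nat) as [|d] eqn:E. simpl. auto.
    pose proof (Nat.div_mod (r 0%nat) (S d)) as D. pose proof (Nat.mod_upper_bound (r 0%nat) (S d)).
    nia.
  - intros m Hm. destruct (r 1%nat) as [|d] eqn:E. simpl in Hm. lia.
    pose proof (Nat.div_mod (r 0%nat) (S d)) as D. nia.
Qed.

Lemma C_mod f g : Cmp f -> Cmp g -> Cmp (fun r => (f r mod g r)%nat).
Proof.
  intros Hf Hg. apply (C_comp2 Nat.modulo); auto.
  eapply C_ext. apply (C_sub (fun r => r 0%nat) (fun r => r 1%nat * (r 0%nat / r 1%nat))%nat).
  apply C_var. apply C_mul. apply C_var. apply C_div; apply C_var.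
  intros r. cbv beta. pose proof (Nat.div_mod_eq (r 0%nat) (r 1%nat)). remember (r 1%nat * (r 0%nat / r 1%nat))%nat. lia.
Qed.

Fixpoint nsum (n : nat) (f : nat -> nat) : nat :=
  match n with 0 => 0%nat | S n' => (nsum n' f + f n')%nat end.

Lemma C_nsumB F (B : nat -> env -> nat) : Cmp F -> Cmp (fun r => B (r 0%nat) (fun j => r (S j))) ->
  Cmp (fun r => nsum (F r) (fun i => B i r)).
Proof.
  intros HF HB. eapply C_ext.
  apply (C_prim (fun _ => 0%nat) (fun r' => r' 1%nat + B (r' 0%nat) (fun j => r' (S (S j))))%nat F).
  apply C_zero. apply C_add. apply C_var.
  apply (C_ren (fun r => B (r 0%nat) (fun j => r (S j))) (fun i => match i with 0 => 0 | S j => S (S j) end)%nat); auto.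
  intros k. exists k. intros [|i] Hi; lia.
  auto.
  intros r. simpl. induction (F r); simpl; auto.
Qed.

Lemma C_funB (h : nat -> nat) f : computable_fun h -> Cmp f -> Cmp (fun r => h (f r)).
Proof. apply C_fun1. Qed.

Ltac solveC := cbv beta; lazymatch goal with
 | |- Cmp (fun r => r ?i) => apply C_var
 | |- Cmp (fun r => S (@?X r)) => apply (C_succ X); solveC
 | |- Cmp (fun r => Nat.pred (@?X r)) => apply (C_pred X); solveC
 | |- Cmp (fun r => (@?X r) + (@?Y r))%nat => apply (C_add X Y); solveC
 | |- Cmp (fun r => (@?X r) * (@?Y r))%nat => apply (C_mul X Y); solveC
 | |- Cmp (fun r => (@?X r) - (@?Y r))%nat => apply (C_sub X Y); solveC
 | |- Cmp (fun r => (@?X r) / (@?Y r))%nat => apply (C_div X Y); solveC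
 | |- Cmp (fun r => (@?X r) mod (@?Y r))%nat => apply (C_mod X Y); solveC
 | |- Cmp (fun r => (@?X r) ^ (@?Y r))%nat => apply (C_pow X Y); solveC
 | |- Cmp (fun r => nsum (@?F r) (fun i => @?B i r)) => apply (C_nsumB F B); solveC
 | |- _ => first [apply C_const | idtac]
 end.


Goal Cmp (fun r => nsum (r 0%nat) (fun i => i * r 1%nat + 2 ^ r 2%nat - i mod 3))%nat.
Proof. solveC. Qed.

End Part_Comp2.
Import Part_Comp2.

Module Part_Algo.
Local Open Scope nat_scope.

Definition tri (s:nat) := s * S s / 2.
Definition us z := minz (fun s => S z - tri (S s)).
Definition ub z := z - tri (us z).
Definition ua z := us z - ub z.
Definition slen e := minz (fun s => (e + 2) - 2 ^ S s).
Definition rsig e := e + 1 - 2 ^ slen e.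
Definition isz x := 1 - x.
Definition eqn a b := isz ((a - b) + (b - a)).
Definition neq a b := 1 - eqn a b.

Lemma tri_S s : tri (S s) = tri s + S s.
Proof.
  unfold tri. replace (S s * S (S s)) with (s * S s + S s * 2) by lia.
  rewrite Nat.div_add; lia.
Qed.

Lemma tri_mono a b : a <= b -> tri a <= tri b.
Proof. induction 1; auto. rewrite tri_S. lia. Qed.

Lemma tri_ge s : s <= tri s.
Proof. induction s. lia. rewrite tri_S. lia. Qed.

Lemma npair_tri a b : npair a b = tri (a + b) + b.
Proof. unfold npair, tri. f_equal. f_equal. f_equal. lia. Qed.

Lemma us_npair a b : us (npair a b) = a + b.
Proof.
  unfold us. apply minz_unique.
  - rewrite npair_tri, tri_S. lia.
  - intros m Hm. rewrite npair_tri. pose proof (tri_mono (S m) (a+b)). lia.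
Qed.

Lemma ub_npair a b : ub (npair a b) = b.
Proof. unfold ub. rewrite us_npair, npair_tri. lia. Qed.

Lemma ua_npair a b : ua (npair a b) = a.
Proof. unfold ua. rewrite us_npair, ub_npair. lia. Qed.

Lemma pow2_ge n : n + 1 <= 2 ^ n.
Proof. induction n; simpl; lia. Qed.

Lemma isz_eq x : isz x = if Nat.eqb x 0 then 1 else 0.
Proof. unfold isz. destruct x; simpl; lia. Qed.

Lemma eqn_eq a b : eqn a b = if Nat.eqb a b then 1 else 0.
Proof.
  unfold eqn, isz. destruct (Nat.eqb_spec a b). subst. rewrite Nat.sub_diag. lia. lia.
Qed.

Lemma neq_eq a b : neq a b = if Nat.eqb a b then 0 else 1.
Proof. unfold neq. rewrite eqn_eq. destruct (a =? b); lia. Qed.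

Section Alg.
Variable h g : nat -> nat.

Definition Hq n r m := h (npair (r mod 2^n + 2^n - 1) m).
Definition n0 L r m := minz (fun n => eqn (Hq n r m) 2 * (L - n)).
Definition bitv L r m := Hq (n0 L r m) r m.
Definition det L r m := 1 - isz (nsum (S L) (fun n => neq (Hq n r m) 2)).
Definition bad1 L N := nsum (2^L) (fun r => nsum N (fun m => isz (det L r m))).
Definition agree L N r r' := isz (nsum N (fun m => neq (bitv L r m) (bitv L r' m))).
Definition bad2 s rs L N := nsum (2^L) (fun r => nsum (2^L) (fun r' =>
   eqn (r mod 2^s) rs * neq (r' mod 2^s) rs * agree L N r r')).
Definition Vv s rs N L := (s - L) + bad1 L N + bad2 s rs L N.
Definition w0 s rs := minz (fun w => Vv s rs (ua w) (ub w)).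
Definition outc L N r := nsum N (fun m => bitv L r m * 2^m) + 2^N - 1.
Definition SA s rs k L N := nsum (2^L) (fun r => eqn (r mod 2^s) rs * ua (g (npair (outc L N r) (S k)))).
Definition SC s rs k L N := nsum (2^L) (fun r => eqn (r mod 2^s) rs * ub (g (npair (outc L N r) (S k)))).
Definition fin s rs k N L :=
  npair ((SA s rs k L N - SC s rs k L N + 2^(L-s)) / (2 * 2^(L-s)))
        ((SC s rs k L N - SA s rs k L N + 2^(L-s)) / (2 * 2^(L-s))).
Definition Gp z :=
  fin (slen (ua z)) (rsig (ua z)) (ub z) (ua (w0 (slen (ua z)) (rsig (ua z)))) (ub (w0 (slen (ua z)) (rsig (ua z)))).

Lemma C_us f : Cmp f -> Cmp (fun r => us (f r)).
Proof.
  intros Hf. apply (C_comp1 us); auto. unfold us.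
  apply (C_minB (fun s r => S (r 0) - tri (S s))). unfold tri. solveC.
  intros r. exists (r 0). rewrite tri_S. pose proof (tri_ge (r 0)). lia.
Qed.

Lemma C_ub f : Cmp f -> Cmp (fun r => ub (f r)).
Proof.
  intros Hf. apply (C_comp1 ub); auto. unfold ub.
  apply C_sub. apply C_var. unfold tri. apply (C_comp1 (fun s => s * S s / 2)). solveC. apply C_us, C_var.
Qed.

Lemma C_ua f : Cmp f -> Cmp (fun r => ua (f r)).
Proof.
  intros Hf. apply (C_comp1 ua); auto. unfold ua. apply C_sub. apply C_us, C_var. apply C_ub, C_var.
Qed.

Lemma C_slen f : Cmp f -> Cmp (fun r => slen (f r)).
Proof.
  intros Hf. apply (C_comp1 slen); auto. unfold slen.
  apply (C_minB (fun s r => (r 0 + 2) - 2 ^ S s)). solveC.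
  intros r. exists (r 0). pose proof (pow2_ge (S (r 0))). lia.
Qed.

Hypothesis hc : computable_fun h.
Hypothesis gc : computable_fun g.

Ltac solveA := cbv beta; lazymatch goal with
 | |- Cmp (fun r => r ?i) => apply C_var
 | |- Cmp (fun r => S (@?X r)) => apply (C_succ X); solveA
 | |- Cmp (fun r => Nat.pred (@?X r)) => apply (C_pred X); solveA
 | |- Cmp (fun r => (@?X r) + (@?Y r))%nat => apply (C_add X Y); solveA
 | |- Cmp (fun r => (@?X r) * (@?Y r))%nat => apply (C_mul X Y); solveA
 | |- Cmp (fun r => (@?X r) - (@?Y r))%nat => apply (C_sub X Y); solveA
 | |- Cmp (fun r => (@?X r) / (@?Y r))%nat => apply (C_div X Y); solveA
 | |- Cmp (fun r => (@?X r) mod (@?Y r))%nat => apply (C_mod X Y); solveA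
 | |- Cmp (fun r => (@?X r) ^ (@?Y r))%nat => apply (C_pow X Y); solveA
 | |- Cmp (fun r => nsum (@?F r) (fun i => @?B i r)) => apply (C_nsumB F B); solveA
 | |- Cmp (fun r => us (@?X r)) => apply (C_us X); solveA
 | |- Cmp (fun r => ua (@?X r)) => apply (C_ua X); solveA
 | |- Cmp (fun r => ub (@?X r)) => apply (C_ub X); solveA
 | |- Cmp (fun r => slen (@?X r)) => apply (C_slen X); solveA
 | |- Cmp (fun r => h (@?X r)) => apply (C_funB h X hc); solveA
 | |- Cmp (fun r => g (@?X r)) => apply (C_funB g X gc); solveA
 | |- _ => first [apply C_const | idtac]
 end.

Ltac unf := unfold neq, npair, eqn, isz, rsig in *.

Lemma C_Hq f1 f2 f3 : Cmp f1 -> Cmp f2 -> Cmp f3 -> Cmp (fun r => Hq (f1 r) (f2 r) (f3 r)).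
Proof. intros. apply (C_comp3 Hq); auto. unfold Hq. unf. solveA. Qed.

Ltac solve1 := cbv beta; lazymatch goal with
 | |- Cmp (fun r => Hq (@?X r) (@?Y r) (@?Z r)) => apply (C_Hq X Y Z); solve1
 | |- Cmp (fun r => r ?i) => apply C_var
 | |- Cmp (fun r => S (@?X r)) => apply (C_succ X); solve1
 | |- Cmp (fun r => Nat.pred (@?X r)) => apply (C_pred X); solve1
 | |- Cmp (fun r => (@?X r) + (@?Y r))%nat => apply (C_add X Y); solve1
 | |- Cmp (fun r => (@?X r) * (@?Y r))%nat => apply (C_mul X Y); solve1
 | |- Cmp (fun r => (@?X r) - (@?Y r))%nat => apply (C_sub X Y); solve1
 | |- Cmp (fun r => (@?X r) / (@?Y r))%nat => apply (C_div X Y); solve1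
 | |- Cmp (fun r => (@?X r) mod (@?Y r))%nat => apply (C_mod X Y); solve1
 | |- Cmp (fun r => (@?X r) ^ (@?Y r))%nat => apply (C_pow X Y); solve1
 | |- Cmp (fun r => nsum (@?F r) (fun i => @?B i r)) => apply (C_nsumB F B); solve1
 | |- Cmp (fun r => us (@?X r)) => apply (C_us X); solve1
 | |- Cmp (fun r => ua (@?X r)) => apply (C_ua X); solve1
 | |- Cmp (fun r => ub (@?X r)) => apply (C_ub X); solve1
 | |- Cmp (fun r => slen (@?X r)) => apply (C_slen X); solve1
 | |- Cmp (fun r => h (@?X r)) => apply (C_funB h X hc); solve1
 | |- Cmp (fun r => g (@?X r)) => apply (C_funB g X gc); solve1
 | |- _ => first [apply C_const | idtac]
 end.


Lemma C_n0 f1 f2 f3 : Cmp f1 -> Cmp f2 -> Cmp f3 -> Cmp (fun r => n0 (f1 r) (f2 r) (f3 r)).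
Proof.
  intros. apply (C_comp3 n0); auto. unfold n0.
  apply (C_minB (fun n r => eqn (Hq n (r 1) (r 2)) 2 * (r 0 - n))).
  unf. solve1.
  intros r. exists (r 0). rewrite Nat.sub_diag. lia.
Qed.

Lemma C_bitv f1 f2 f3 : Cmp f1 -> Cmp f2 -> Cmp f3 -> Cmp (fun r => bitv (f1 r) (f2 r) (f3 r)).
Proof.
  intros. apply (C_comp3 bitv); auto. unfold bitv.
  apply C_Hq; try solveA. apply C_n0; solveA.
Qed.

Ltac solveB := cbv beta; lazymatch goal with
 | |- Cmp (fun r => Hq (@?X r) (@?Y r) (@?Z r)) => apply (C_Hq X Y Z); solveB
 | |- Cmp (fun r => bitv (@?X r) (@?Y r) (@?Z r)) => apply (C_bitv X Y Z); solveB
 | |- Cmp (fun r => r ?i) => apply C_var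
 | |- Cmp (fun r => S (@?X r)) => apply (C_succ X); solveB
 | |- Cmp (fun r => (@?X r) + (@?Y r))%nat => apply (C_add X Y); solveB
 | |- Cmp (fun r => (@?X r) * (@?Y r))%nat => apply (C_mul X Y); solveB
 | |- Cmp (fun r => (@?X r) - (@?Y r))%nat => apply (C_sub X Y); solveB
 | |- Cmp (fun r => (@?X r) / (@?Y r))%nat => apply (C_div X Y); solveB
 | |- Cmp (fun r => (@?X r) mod (@?Y r))%nat => apply (C_mod X Y); solveB
 | |- Cmp (fun r => (@?X r) ^ (@?Y r))%nat => apply (C_pow X Y); solveB
 | |- Cmp (fun r => nsum (@?F r) (fun i => @?B i r)) => apply (C_nsumB F B); solveB
 | |- Cmp (fun r => us (@?X r)) => apply (C_us X); solveB
 | |- Cmp (fun r => ua (@?X r)) => apply (C_ua X); solveB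
 | |- Cmp (fun r => ub (@?X r)) => apply (C_ub X); solveB
 | |- Cmp (fun r => slen (@?X r)) => apply (C_slen X); solveB
 | |- Cmp (fun r => h (@?X r)) => apply (C_funB h X hc); solveB
 | |- Cmp (fun r => g (@?X r)) => apply (C_funB g X gc); solveB
 | |- _ => first [apply C_const | idtac]
 end.

Lemma C_Vv : Cmp (fun r => Vv (r 0) (r 1) (r 2) (r 3)).
Proof.
  unfold Vv, bad1, bad2, agree, det. unf. solveB.
Qed.

Hypothesis w0tot : forall s rs, exists w, Vv s rs (ua w) (ub w) = 0.

Lemma C_w0 f1 f2 : Cmp f1 -> Cmp f2 -> Cmp (fun r => w0 (f1 r) (f2 r)).
Proof.
  intros. apply (C_comp2 w0); auto. unfold w0.
  apply (C_minB (fun w r => Vv (r 0) (r 1) (ua w) (ub w))).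
  apply (C_comp4 Vv). apply C_Vv. solveB. solveB. solveB. solveB.
  intros r. apply w0tot.
Qed.

Lemma C_fin : Cmp (fun r => fin (r 0) (r 1) (r 2) (r 3) (r 4)).
Proof.
  unfold fin, SA, SC, outc. unf. solveB.
Qed.

Lemma Gp_computable : computable_fun Gp.
Proof.
  assert (H : Cmp (fun r => Gp (r 0))).
  { unfold Gp. apply (C_comp5 fin). apply C_fin.
    solveB. unfold rsig. solveB. solveB.
    apply C_ua, C_w0; unfold rsig; solveB.
    apply C_ub, C_w0; unfold rsig; solveB. }
  destruct (H 1) as [c Hc]. exists c. intros n. apply (Hc [n]). reflexivity.
Qed.

End Alg.

End Part_Algo.
Import Part_Algo.

Module Part_Str.
Local Open Scope nat_scope.

Fixpoint bits (L r : nat) : list bool :=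
  match L with 0 => [] | S L' => Nat.odd r :: bits L' (Nat.div2 r) end.

Lemma bits_length L r : length (bits L r) = L.
Proof. revert r; induction L; simpl; auto. Qed.

Lemma odd_2b x c : Nat.odd (Nat.b2n c + 2 * x) = c.
Proof. rewrite Nat.odd_add_mul_2. destruct c; reflexivity. Qed.

Lemma div2_2b x c : Nat.div2 (Nat.b2n c + 2 * x) = x.
Proof. destruct c; simpl Nat.b2n.
  - replace (1 + 2 * x) with (S (2 * x)) by lia. apply Nat.div2_succ_double.
  - apply Nat.div2_double. Qed.

Lemma mod2_lemma q c P : 0 < P -> (Nat.b2n c + 2 * q) mod (2 * P) = Nat.b2n c + 2 * (q mod P).
Proof.
  intros HP. symmetry. apply Nat.mod_unique with (q := q / P).
  pose proof (Nat.mod_upper_bound q P). destruct c; simpl; lia.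
  pose proof (Nat.div_mod q P). lia.
Qed.

Lemma pow2_pos n : 0 < 2 ^ n.
Proof. apply Nat.neq_0_lt_0, Nat.pow_nonzero. lia. Qed.

Lemma enc_bits_bits L r : enc_bits (bits L r) = r mod 2 ^ L + 2 ^ L - 1.
Proof.
  revert r; induction L; intros r. cbn [bits enc_bits]. rewrite Nat.pow_0_r, Nat.mod_1_r. lia.
  simpl bits. simpl enc_bits. rewrite IHL.
  pose proof (Nat.div2_odd r) as E.
  remember (Nat.div2 r) as q. remember (Nat.odd r) as c.
  assert (r = Nat.b2n c + 2 * q) by lia. subst r.
  rewrite Nat.pow_succ_r'. rewrite H, mod2_lemma by apply pow2_pos.
  pose proof (pow2_pos L). destruct c; simpl Nat.b2n; lia.
Qed.

Lemma firstn_bits n L r : n <= L -> firstn n (bits L r) = bits n r.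
Proof.
  revert L r; induction n; intros L r H. reflexivity.
  destruct L. lia. simpl. f_equal. apply IHn. lia.
Qed.

Lemma enc_bound s : 2 ^ length s <= enc_bits s + 1 /\ enc_bits s + 2 <= 2 ^ S (length s).
Proof.
  induction s as [|c s IH]; simpl. lia.
  destruct c; simpl in *; lia.
Qed.

Lemma bits_enc s : bits (length s) (enc_bits s + 1 - 2 ^ length s) = s.
Proof.
  induction s as [|c s IH]. reflexivity.
  pose proof (enc_bound s) as [B1 B2].
  remember (enc_bits s + 1 - 2 ^ length s) as x.
  assert (E : enc_bits (c :: s) + 1 - 2 ^ length (c :: s) = Nat.b2n c + 2 * x).
  { simpl enc_bits. simpl length. rewrite Nat.pow_succ_r'. destruct c; simpl Nat.b2n; lia. }
  rewrite E. simpl length. cbn [bits]. rewrite odd_2b, div2_2b, IH. reflexivity.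
Qed.

Lemma enc_inj s t : enc_bits s = enc_bits t -> s = t.
Proof.
  revert t; induction s as [|c s IH]; intros [|d t] H; simpl in H; auto.
  - destruct d; lia.
  - destruct c; lia.
  - destruct c, d; try lia; f_equal; apply IH; lia.
Qed.

Lemma bits_even n a : bits (S n) (2 * a) = false :: bits n a.
Proof. cbn [bits]. pose proof (odd_2b a false) as H1. pose proof (div2_2b a false) as H2.
  simpl Nat.b2n in *. rewrite Nat.add_0_l in *. rewrite H1, H2. reflexivity. Qed.

Lemma bits_odd n a : bits (S n) (S (2 * a)) = true :: bits n a.
Proof. cbn [bits]. pose proof (odd_2b a true) as H1. pose proof (div2_2b a true) as H2.
  simpl Nat.b2n in *. replace (S (2 * a)) with (1 + 2 * a) by lia. rewrite H1, H2. reflexivity. Qed.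

Lemma map_bits_double n a m :
  flat_map (fun s => [false :: s; true :: s]) (map (bits n) (seq a m)) =
  map (bits (S n)) (seq (2 * a) (2 * m)).
Proof.
  revert a; induction m; intros a. simpl. replace (2*0) with 0 by lia. reflexivity.
  replace (2 * S m) with (S (S (2 * m))) by lia.
  change (seq (2*a) (S (S (2*m)))) with (2*a :: S (2*a) :: seq (S (S (2*a))) (2*m)).
  cbn [seq map flat_map app]. rewrite IHm. replace (2 * S a) with (S (S (2 * a))) by lia.
  rewrite bits_even, bits_odd. reflexivity.
Qed.

Lemma all_strings_bits L : all_strings L = map (bits L) (seq 0 (2 ^ L)).
Proof.
  induction L. reflexivity.
  simpl all_strings. rewrite IHL, map_bits_double. rewrite Nat.pow_succ_r'. reflexivity.
Qed.

Lemma in_all_strings_length L s : In s (all_strings L) -> length s = L.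
Proof.
  rewrite all_strings_bits. intros H. apply in_map_iff in H. destruct H as [r [<- _]].
  apply bits_length.
Qed.

Definition Xl (rho : list bool) : cantor := fun i => nth i rho false.

Lemma restr_length X n : length (restr X n) = n.
Proof. unfold restr. rewrite length_map, length_seq. auto. Qed.

Lemma nth_restr X n i : i < n -> nth i (restr X n) false = X i.
Proof.
  intros H. unfold restr.
  rewrite nth_indep with (d' := X 0) by (rewrite length_map, length_seq; auto).
  rewrite map_nth, seq_nth; auto.
Qed.

Lemma restr_eq_iff X Y n : restr X n = restr Y n <-> forall i, i < n -> X i = Y i.
Proof.
  split.
  - intros H i Hi. rewrite <- (nth_restr X n i Hi), <- (nth_restr Y n i Hi), H. auto.
  - intros H. unfold restr. apply map_ext_in. intros a Ha. apply in_seq in Ha. apply H. lia.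
Qed.

Lemma ext_restr_iff X rho : ext X rho <-> restr X (length rho) = rho.
Proof.
  split.
  - intros H. apply nth_ext with (d := false) (d' := false). rewrite restr_length; auto.
    intros i Hi. rewrite restr_length in Hi. rewrite nth_restr by auto. apply H; auto.
  - intros H i Hi. rewrite <- H. rewrite nth_restr; auto.
Qed.

Lemma ext_restr X n : ext X (restr X n).
Proof. intros i Hi. rewrite restr_length in Hi. rewrite nth_restr; auto. Qed.

Lemma ext_Xl rho : ext (Xl rho) rho.
Proof. intros i Hi. reflexivity. Qed.

Lemma firstn_restr X n L : n <= L -> firstn n (restr X L) = restr X n.
Proof.
  intros H. unfold restr. rewrite firstn_map. f_equal.
  replace L with (n + (L - n)) by lia. rewrite seq_app, firstn_app, length_seq, Nat.sub_diag.
  simpl. rewrite app_nil_r. apply firstn_all2. rewrite length_seq. lia.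
Qed.

Lemma ext_firstn X rho n : ext X rho -> n <= length rho -> restr X n = firstn n rho.
Proof.
  intros H Hn. apply ext_restr_iff in H. rewrite <- H. rewrite firstn_restr; auto.
Qed.

Lemma ext_same X Y rho : ext X rho -> ext Y rho -> restr X (length rho) = restr Y (length rho).
Proof. intros H1 H2. apply ext_restr_iff in H1, H2. congruence. Qed.

Lemma restr_mono X Y n m : m <= n -> restr X n = restr Y n -> restr X m = restr Y m.
Proof.
  intros Hm H. rewrite restr_eq_iff in *. intros i Hi. apply H. lia.
Qed.

Lemma ext_app_iff X rho c : ext X (rho ++ [c]) <-> ext X rho /\ X (length rho) = c.
Proof.
  split.
  - intros H. split.
    + intros i Hi. rewrite H by (rewrite length_app; simpl; lia). rewrite app_nth1; auto.
    + rewrite H by (rewrite length_app; simpl; lia). rewrite app_nth2, Nat.sub_diag by lia. auto.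
  - intros [H1 H2] i Hi. rewrite length_app in Hi. simpl in Hi.
    destruct (Nat.lt_ge_cases i (length rho)).
    + rewrite app_nth1; auto.
    + replace i with (length rho) by lia. rewrite app_nth2, Nat.sub_diag by lia. auto.
Qed.

Lemma Xl_app_lt rho c i : i < length rho -> Xl (rho ++ [c]) i = Xl rho i.
Proof. intros H. unfold Xl. rewrite app_nth1; auto. Qed.

Lemma ext_Xl_app rho sigma c : length sigma <= length rho ->
  (ext (Xl (rho ++ [c])) sigma <-> ext (Xl rho) sigma).
Proof.
  intros H. split; intros E i Hi; rewrite <- E by auto; rewrite Xl_app_lt; auto; lia.
Qed.

End Part_Str.
Import Part_Str.

Module Part_Kon.
Local Open Scope nat_scope.

Section K.
Variable A : Type.
Variable a0 : A.
Variable l : list A.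
Hypothesis Hl : forall a, In a l.
Variable T : list A -> Prop.
Hypothesis Tpre : forall u v, T (u ++ v) -> T u.
Hypothesis Tinf : forall n, exists u, length u = n /\ T u.

Definition infT u := forall n, exists v, length v = n /\ T (u ++ v).

Lemma bad_mono u a n n' : n <= n' -> (forall v, length v = n -> ~ T ((u ++ [a]) ++ v)) ->
  forall v, length v = n' -> ~ T ((u ++ [a]) ++ v).
Proof.
  intros Hn H v Hv HT. apply (H (firstn n v)). rewrite length_firstn. lia.
  apply (Tpre _ (skipn n v)). rewrite <- app_assoc, firstn_skipn. auto.
Qed.

Lemma inf_step u : infT u -> exists a, infT (u ++ [a]).
Proof.
  intros Hu. apply NNPP. intros Hno.
  assert (Hb : forall a, exists n, forall v, length v = n -> ~ T ((u ++ [a]) ++ v)).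
  { intros a. apply NNPP. intros Hn. apply Hno. exists a. intros n. apply NNPP. intros Hn2.
    apply Hn. exists n. intros v Hv HT. apply Hn2. eauto. }
  assert (HM : forall l', exists M, forall a, In a l' -> forall v, length v = M -> ~ T ((u ++ [a]) ++ v)).
  { induction l' as [|x l' IH]. exists 0. intros a [].
    destruct IH as [M HM]. destruct (Hb x) as [n Hn]. exists (Nat.max M n).
    intros a [<-|Ha]. apply (bad_mono u x n); auto; lia.
    apply (bad_mono u a M); auto; lia. }
  destruct (HM l) as [M HMl]. destruct (Hu (S M)) as [[|a v] [Hv HT]]. simpl in Hv; lia.
  apply (HMl a (Hl a) v). simpl in Hv; lia. rewrite <- app_assoc. auto.
Qed.

Fixpoint pth (n : nat) : list A :=
  match n with 0 => [] | S n => pth n ++ [epsilon (inhabits a0) (fun a => infT (pth n ++ [a]))] end.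

Lemma inf_pth n : infT (pth n).
Proof.
  induction n. intros n. destruct (Tinf n) as [u Hu]. exists u. auto.
  simpl. apply (epsilon_spec (inhabits a0) (fun a => infT (pth n ++ [a]))). apply inf_step; auto.
Qed.

Lemma pth_length n : length (pth n) = n.
Proof. induction n; simpl; auto. rewrite length_app; simpl; lia. Qed.

Lemma koenig : exists f : nat -> A, forall n, T (map f (seq 0 n)).
Proof.
  exists (fun i => nth i (pth (S i)) a0). intros n.
  assert (E : pth n = map (fun i => nth i (pth (S i)) a0) (seq 0 n)).
  { induction n. auto. rewrite seq_S, map_app, <- IHn. simpl. f_equal. f_equal.
    rewrite app_nth2; rewrite pth_length; auto. rewrite Nat.sub_diag. auto. }
  rewrite <- E. destruct (inf_pth n 0) as [v [Hv HT]]. destruct v; simpl in Hv; try lia.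
  rewrite app_nil_r in HT. auto.
Qed.
End K.

End Part_Kon.
Import Part_Kon.

Module Part_Meas.
Local Open Scope R_scope.

Lemma sumR_ext_in {A} (l : list A) f g : (forall x, In x l -> f x = g x) -> sumR l f = sumR l g.
Proof. induction l; simpl; intros H; auto. rewrite H, IHl; auto. Qed.

Lemma sumR_plus {A} (l : list A) f g : sumR l (fun x => f x + g x) = sumR l f + sumR l g.
Proof. induction l; simpl. lra. rewrite IHl. lra. Qed.

Lemma sumR_scal {A} (l : list A) c f : sumR l (fun x => c * f x) = c * sumR l f.
Proof. induction l; simpl. lra. rewrite IHl. lra. Qed.

Lemma sumR_le {A} (l : list A) f g : (forall x, In x l -> f x <= g x) -> sumR l f <= sumR l g.
Proof. induction l; simpl; intros H. lra. apply Rplus_le_compat; auto. Qed.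

Lemma sumR_app {A} (l1 l2 : list A) f : sumR (l1 ++ l2) f = sumR l1 f + sumR l2 f.
Proof. induction l1; simpl. lra. rewrite IHl1. lra. Qed.

Lemma sumR_map {A B} (h : A -> B) (l : list A) f : sumR (map h l) f = sumR l (fun x => f (h x)).
Proof. induction l; simpl; auto. rewrite IHl; auto. Qed.

Lemma sumR_flat_map {A B} (h : A -> list B) (l : list A) f :
  sumR (flat_map h l) f = sumR l (fun x => sumR (h x) f).
Proof. induction l; simpl; auto. rewrite sumR_app, IHl; auto. Qed.

Lemma sumR_swap {A B} (l1 : list A) (l2 : list B) F :
  sumR l1 (fun x => sumR l2 (fun y => F x y)) = sumR l2 (fun y => sumR l1 (fun x => F x y)).
Proof.
  induction l1; simpl. induction l2; simpl; auto. lra.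
  rewrite IHl1, <- sumR_plus. auto.
Qed.

Lemma sumR_abs {A} (l : list A) f : Rabs (sumR l f) <= sumR l (fun x => Rabs (f x)).
Proof.
  induction l; simpl. rewrite Rabs_R0; lra.
  eapply Rle_trans. apply Rabs_triang. lra.
Qed.

Lemma sumR_split n (f : list bool -> R) :
  sumR (all_strings (S n)) f = sumR (all_strings n) (fun s => f (s ++ [false]) + f (s ++ [true])).
Proof.
  revert f; induction n; intros f.
  - simpl. lra.
  - change (all_strings (S (S n))) with (flat_map (fun s => [false :: s; true :: s]) (all_strings (S n))).
    rewrite sumR_flat_map.
    transitivity (sumR (all_strings (S n)) (fun x => f (false :: x) + f (true :: x))).
    apply sumR_ext_in; intros; simpl; lra.
    rewrite (IHn (fun x => f (false :: x) + f (true :: x))).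
    change (all_strings (S n)) with (flat_map (fun s => [false :: s; true :: s]) (all_strings n)).
    rewrite sumR_flat_map. apply sumR_ext_in. intros x _. simpl. lra.
Qed.

Lemma indic_iff P Q : (P <-> Q) -> indic P = indic Q.
Proof.
  intros H. unfold indic. destruct (excluded_middle_informative P), (excluded_middle_informative Q); tauto.
Qed.
Lemma indic_T (P : Prop) : P -> indic P = 1.
Proof. intros H. unfold indic. destruct (excluded_middle_informative P); tauto. Qed.
Lemma indic_F (P : Prop) : ~ P -> indic P = 0.
Proof. intros H. unfold indic. destruct (excluded_middle_informative P); tauto. Qed.
Lemma indic_and P Q : indic (P /\ Q) = indic P * indic Q.
Proof.
  unfold indic. destruct (excluded_middle_informative P), (excluded_middle_informative Q),
    (excluded_middle_informative (P /\ Q)); try tauto; lra.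
Qed.
Lemma indic_bounds P : 0 <= indic P <= 1.
Proof. unfold indic. destruct (excluded_middle_informative P); lra. Qed.

Lemma restr_S Y N : restr Y (S N) = Y 0%nat :: restr (fun i => Y (S i)) N.
Proof. unfold restr. simpl. f_equal. rewrite <- seq_shift, map_map. auto. Qed.

Lemma ext_cons Y c t : ext Y (c :: t) <-> Y 0%nat = c /\ ext (fun i => Y (S i)) t.
Proof.
  split.
  - intros H. split. apply (H 0%nat). simpl; lia. intros i Hi. apply (H (S i)). simpl; lia.
  - intros [H1 H2] [|i] Hi; simpl. auto. apply H2. simpl in Hi; lia.
Qed.

Lemma sum_ext_unique N (F : list bool -> R) (Y : cantor) :
  sumR (all_strings N) (fun t => F t * indic (ext Y t)) = F (restr Y N).
Proof.
  revert F Y; induction N; intros F Y.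
  - simpl. rewrite indic_T. unfold restr. simpl. lra. intros i Hi; simpl in Hi; lia.
  - change (all_strings (S N)) with (flat_map (fun s => [false :: s; true :: s]) (all_strings N)).
    rewrite sumR_flat_map. rewrite restr_S. simpl sumR.
    rewrite <- (IHN (fun t => F (Y 0%nat :: t)) (fun i => Y (S i))).
    apply sumR_ext_in. intros t _.
    rewrite (indic_iff _ _ (ext_cons Y false t)), (indic_iff _ _ (ext_cons Y true t)), !indic_and.
    destruct (Y 0%nat).
    + rewrite (indic_F (true = false)), (indic_T (true = true)) by congruence. lra.
    + rewrite (indic_F (false = true)), (indic_T (false = false)) by congruence. lra.
Qed.

Lemma ext_Xl_sym rho sigma : length rho = length sigma ->
  (ext (Xl rho) sigma <-> ext (Xl sigma) rho).
Proof.
  intros H. split; intros E i Hi; unfold Xl in *; symmetry; apply E; lia.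
Qed.

Lemma count_ext sigma L : (length sigma <= L)%nat ->
  sumR (all_strings L) (fun rho => indic (ext (Xl rho) sigma)) = 2 ^ (L - length sigma).
Proof.
  intros HL. induction HL.
  - rewrite Nat.sub_diag. simpl.
    transitivity (sumR (all_strings (length sigma)) (fun t => (fun _ => 1) t * indic (ext (Xl sigma) t))).
    apply sumR_ext_in. intros x Hx. rewrite Rmult_1_l. apply indic_iff, ext_Xl_sym.
    apply in_all_strings_length in Hx. auto.
    apply sum_ext_unique.
  - rewrite sumR_split. replace (S m - length sigma)%nat with (S (m - length sigma)) by lia.
    simpl. rewrite <- IHHL. rewrite <- sumR_scal. apply sumR_ext_in. intros x Hx.
    apply in_all_strings_length in Hx.
    rewrite (indic_iff _ _ (ext_Xl_app x sigma false ltac:(lia))).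
    rewrite (indic_iff _ _ (ext_Xl_app x sigma true ltac:(lia))). lra.
Qed.

Definition det_at (L : nat) (A : cantor -> Prop) := forall X Y, restr X L = restr Y L -> A X -> A Y.

Lemma inner_mono n A : inner n A <= inner (S n) A.
Proof.
  unfold inner. rewrite sumR_split. apply sumR_le. intros x Hx.
  apply in_all_strings_length in Hx.
  assert (forall c, indic (forall X, ext X x -> A X) <= indic (forall X, ext X (x ++ [c]) -> A X)).
  { intros c. unfold indic. destruct (excluded_middle_informative (forall X, ext X x -> A X)) as [P|P];
    destruct (excluded_middle_informative (forall X, ext X (x ++ [c]) -> A X)) as [Q|Q]; try lra.
    exfalso. apply Q. intros X HX. apply P. apply ext_app_iff in HX. tauto. }
  pose proof (H false). pose proof (H true). simpl pow.
  assert (0 <= (/2)^n) by (apply pow_le; lra). nra.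
Qed.

Lemma inner_stable n L A : det_at L A -> (L <= n)%nat -> inner (S n) A = inner n A.
Proof.
  intros HA Hn. unfold inner. rewrite sumR_split. apply sumR_ext_in. intros x Hx.
  apply in_all_strings_length in Hx.
  assert (forall c, indic (forall X, ext X (x ++ [c]) -> A X) = indic (forall X, ext X x -> A X)).
  { intros c. apply indic_iff. split.
    - intros H X HX. set (X' := fun i => if Nat.eqb i (length x) then c else X i).
      apply (HA X'). apply restr_eq_iff. intros i Hi. unfold X'.
      destruct (Nat.eqb_spec i (length x)); auto. lia.
      apply H. apply ext_app_iff. split.
      intros i Hi. unfold X'. destruct (Nat.eqb_spec i (length x)). lia. apply HX; auto.
      unfold X'. rewrite Nat.eqb_refl. auto.
    - intros H X HX. apply H. apply ext_app_iff in HX. tauto. }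
  rewrite !H. simpl pow. field.
Qed.

Lemma inner_le n m A : (n <= m)%nat -> inner n A <= inner m A.
Proof. induction 1. lra. eapply Rle_trans. apply IHle. apply inner_mono. Qed.

Lemma mu_det L A : det_at L A -> mu A = inner L A.
Proof.
  intros HA.
  assert (Hle : forall n, inner n A <= inner L A).
  { intros n. destruct (Nat.le_gt_cases n L).
    - apply inner_le; auto.
    - replace n with (L + (n - L))%nat by lia. generalize (n - L)%nat. intros d.
      induction d. rewrite Nat.add_0_r; lra.
      rewrite Nat.add_succ_r, (inner_stable _ L A HA) by lia. auto. }
  assert (Hlub : is_lub (fun x => exists n, x = inner n A) (inner L A)).
  { split. intros x [n ->]. auto. intros b Hb. apply Hb. eauto. }
  unfold mu. destruct (epsilon_spec (inhabits 0) (fun r => is_lub (fun x => exists n, x = inner n A) r)) as [B1 B2].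
  eauto. apply Rle_antisym. apply B2. apply Hlub. apply Hlub. apply B1.
Qed.

Lemma mu_ext A B : (forall X, A X <-> B X) -> mu A = mu B.
Proof.
  intros H. replace B with A. auto. apply functional_extensionality. intros X.
  apply propositional_extensionality. auto.
Qed.

Lemma mu_empty : mu (fun _ => False) = 0.
Proof.
  rewrite (mu_det 0 (fun _ => False)). unfold inner. simpl.
  rewrite indic_F. lra. intros H. apply (H (fun _ => false)). intros i Hi; simpl in Hi; lia.
  intros X Y _ F; auto.
Qed.

Lemma inner_formula L A : det_at L A ->
  inner L A = (/2)^L * sumR (all_strings L) (fun rho => indic (A (Xl rho))).
Proof.
  intros HA. unfold inner. rewrite <- sumR_scal. apply sumR_ext_in. intros x Hx.
  apply in_all_strings_length in Hx. rewrite Rmult_comm. f_equal. apply indic_iff. split.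
  - intros H. apply H. apply ext_Xl.
  - intros H X HX. apply (HA (Xl x)); auto. subst L. apply ext_same; auto. apply ext_Xl.
Qed.

End Part_Meas.
Import Part_Meas.

Module Part_Phi1.
Local Open Scope nat_scope.

Definition b2 (c : bool) : nat := if c then 1 else 0.

Lemma b2_inj c d : b2 c = b2 d -> c = d.
Proof. destruct c, d; simpl; congruence. Qed.

Section P.
Variable Phi : cantor -> cantor.
Variable h : nat -> nat.
Hypothesis Hh : forall (X : cantor) (m : nat),
  (exists n, h (npair (enc_bits (restr X n)) m) <> 2) /\
  (forall n, h (npair (enc_bits (restr X n)) m) <> 2 ->
             h (npair (enc_bits (restr X n)) m) = (if Phi X m then 1 else 0)).
Hypothesis Hinj : injective_cantor Phi.

Lemma hval X Y n m : h (npair (enc_bits (restr X n)) m) <> 2 -> restr Y n = restr X n ->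
  Phi Y m = Phi X m.
Proof.
  intros H E. pose proof (proj2 (Hh X m) n H) as H1.
  rewrite <- E in H. pose proof (proj2 (Hh Y m) n H) as H2. rewrite E in H2.
  apply b2_inj. unfold b2. congruence.
Qed.

Lemma hval2 X n m : h (npair (enc_bits (restr X n)) m) <> 2 ->
  h (npair (enc_bits (restr X n)) m) = b2 (Phi X m).
Proof. intros H. apply (proj2 (Hh X m) n H). Qed.

Lemma K1 m : exists L, forall X, exists n, n <= L /\ h (npair (enc_bits (restr X n)) m) <> 2.
Proof.
  apply NNPP. intros Hno.
  set (T := fun u : list bool => forall n, n <= length u -> h (npair (enc_bits (firstn n u)) m) = 2).
  assert (Tpre : forall u v, T (u ++ v) -> T u).
  { intros u v H n Hn. specialize (H n). rewrite firstn_app in H.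
    replace (n - length u) with 0 in H by lia. simpl in H. rewrite app_nil_r in H.
    apply H. rewrite length_app; lia. }
  assert (Tinf : forall n, exists u, length u = n /\ T u).
  { intros L. apply NNPP. intros H2. apply Hno. exists L. intros X. apply NNPP. intros H3.
    apply H2. exists (restr X L). split. apply restr_length. intros n Hn.
    rewrite restr_length in Hn. rewrite firstn_restr by auto.
    apply NNPP. intros H4. apply H3. exists n. split; auto. }
  destruct (koenig bool false [false; true] ltac:(intros []; simpl; auto) T Tpre Tinf) as [f Hf].
  destruct (proj1 (Hh f m)) as [n Hn]. apply Hn.
  specialize (Hf n n). fold (restr f n) in Hf. rewrite restr_length in Hf.
  rewrite firstn_restr in Hf by lia. apply Hf. lia.
Qed.

Definition detN (N L : nat) := forall X m, m < N -> exists n, n <= L /\ h (npair (enc_bits (restr X n)) m) <> 2.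

Lemma K1N N : exists L, detN N L.
Proof.
  induction N. exists 0. intros X m Hm. lia.
  destruct IHN as [L HL]. destruct (K1 N) as [L' HL']. exists (Nat.max L L').
  intros X m Hm. destruct (Nat.eq_dec m N) as [E|E].
  - subst. destruct (HL' X) as [n [H1 H2]]. exists n. split; auto; lia.
  - destruct (HL X m ltac:(lia)) as [n [H1 H2]]. exists n. split; auto; lia.
Qed.

Lemma detN_mono N L N' L' : detN N L -> N' <= N -> L <= L' -> detN N' L'.
Proof.
  intros H H1 H2 X m Hm. destruct (H X m ltac:(lia)) as [n [A B]]. exists n; split; auto; lia.
Qed.

Lemma detN_eq N L X Y m : detN N L -> m < N -> restr X L = restr Y L -> Phi Y m = Phi X m.
Proof.
  intros H Hm E. destruct (H X m Hm) as [n [A B]]. apply (hval X Y n m B).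
  symmetry. apply (restr_mono X Y L n); auto.
Qed.

Definition sepP (sigma : list bool) (N : nat) :=
  forall X Y, ext X sigma -> ~ ext Y sigma -> exists m, m < N /\ Phi X m <> Phi Y m.

Lemma sepP_mono sigma N N' : sepP sigma N -> N <= N' -> sepP sigma N'.
Proof.
  intros H HN X Y HX HY. destruct (H X Y HX HY) as [m [A B]]. exists m; split; auto; lia.
Qed.

Lemma ext_restr_eq X Y sigma n : length sigma <= n -> restr X n = restr Y n -> ext X sigma -> ext Y sigma.
Proof.
  intros Hn E HX i Hi. rewrite <- HX by auto. rewrite restr_eq_iff in E. symmetry. apply E. lia.
Qed.

Lemma K2 sigma : exists N, sepP sigma N.
Proof.
  apply NNPP. intros Hno.
  set (T := fun w : list (bool * bool) => exists X Y, ext X sigma /\ ~ ext Y sigma /\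
     restr X (length w) = map fst w /\ restr Y (length w) = map snd w /\
     forall m, m < length w -> Phi X m = Phi Y m).
  assert (Tpre : forall u v, T (u ++ v) -> T u).
  { intros u v [X [Y [H1 [H2 [H3 [H4 H5]]]]]]. exists X, Y. repeat split; auto.
    - rewrite <- (firstn_restr X (length u) (length (u ++ v))) by (rewrite length_app; lia).
      rewrite H3, firstn_map, firstn_app, Nat.sub_diag, firstn_all. simpl. rewrite app_nil_r. auto.
    - rewrite <- (firstn_restr Y (length u) (length (u ++ v))) by (rewrite length_app; lia).
      rewrite H4, firstn_map, firstn_app, Nat.sub_diag, firstn_all. simpl. rewrite app_nil_r. auto.
    - intros m Hm. apply H5. rewrite length_app. lia. }
  assert (Tinf : forall n, exists u, length u = n /\ T u).
  { intros N. apply NNPP. intros H2. apply Hno. exists N. intros X Y HX HY. apply NNPP. intros H3.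
    apply H2. exists (map (fun i => (X i, Y i)) (seq 0 N)). rewrite length_map, length_seq.
    split; auto. exists X, Y. rewrite !map_map. simpl. repeat split; auto.
    all: rewrite ?length_map, ?length_seq; auto. intros m Hm. apply NNPP. intros H4. apply H3. eauto. }
  destruct (koenig (bool * bool) (false, false) [(false,false);(false,true);(true,false);(true,true)]
     ltac:(intros [[] []]; simpl; tauto) T Tpre Tinf) as [f Hf].
  set (X0 := fun i => fst (f i)). set (Y0 := fun i => snd (f i)).
  assert (HXY : forall n, exists X Y, ext X sigma /\ ~ ext Y sigma /\ restr X n = restr X0 n /\
                  restr Y n = restr Y0 n /\ forall m, m < n -> Phi X m = Phi Y m).
  { intros n. destruct (Hf n) as [X [Y [H1 [H2 [H3 [H4 H5]]]]]].
    rewrite length_map, length_seq in *. rewrite map_map in H3, H4.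
    exists X, Y. repeat split; auto. }
  destruct (HXY (length sigma)) as [X [Y [H1 [H2 [H3 [H4 _]]]]]].
  assert (EX : ext X0 sigma) by (apply (ext_restr_eq X X0 sigma (length sigma)); auto).
  assert (EY : ~ ext Y0 sigma).
  { intros E. apply H2. apply (ext_restr_eq Y0 Y sigma (length sigma)); auto. }
  apply EY. apply (ext_restr_eq X0 Y0 sigma (length sigma)); auto.
  apply restr_eq_iff. intros i _. apply (Hinj X0 Y0). intros m.
  destruct (proj1 (Hh X0 m)) as [n1 Hn1]. destruct (proj1 (Hh Y0 m)) as [n2 Hn2].
  set (n := S (m + n1 + n2)).
  destruct (HXY n) as [X' [Y' [_ [_ [A1 [A2 A3]]]]]].
  rewrite <- (hval X0 X' n1 m Hn1). rewrite <- (hval Y0 Y' n2 m Hn2).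
  apply A3. unfold n; lia.
  apply (restr_mono Y' Y0 n); auto. unfold n; lia.
  apply (restr_mono X' X0 n); auto. unfold n; lia.
Qed.

End P.

End Part_Phi1.
Import Part_Phi1.

Module Part_Phi2.
Local Open Scope R_scope.

Section P2.
Variable Phi : cantor -> cantor.
Variable h : nat -> nat.
Variable b : list bool -> R.
Hypothesis Hh : forall (X : cantor) (m : nat),
  (exists n, h (npair (enc_bits (restr X n)) m) <> 2%nat) /\
  (forall n, h (npair (enc_bits (restr X n)) m) <> 2%nat ->
             h (npair (enc_bits (restr X n)) m) = (if Phi X m then 1 else 0)%nat).
Hypothesis Hinj : injective_cantor Phi.
Hypothesis Hb : Phi_martingale Phi b.

Definition Qm sigma tau := mu (fun X => ext X sigma /\ ext (Phi X) tau).
Definition msig sigma := mu (fun X => ext X sigma).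
Definition Sn n sigma := sumR (all_strings n) (fun tau => b tau * (Qm sigma tau / msig sigma)).

Lemma msig_val sigma : msig sigma = (/2)^(length sigma).
Proof.
  unfold msig. rewrite (mu_det (length sigma)).
  rewrite inner_formula. rewrite count_ext by lia. rewrite Nat.sub_diag. simpl. lra.
  all: intros X Y E HX; apply (ext_restr_eq X Y sigma (length sigma)); auto.
Qed.

Lemma pow_half_split L s : (s <= L)%nat -> (/2)^L = (/2)^(L - s) * (/2)^s.
Proof. intros H. rewrite <- pow_add. f_equal. lia. Qed.

Lemma formula N L sigma : detN h N L -> (length sigma <= L)%nat ->
  Sn N sigma = (/2)^(L - length sigma) *
    sumR (all_strings L) (fun rho => indic (ext (Xl rho) sigma) * b (restr (Phi (Xl rho)) N)).
Proof.
  intros HD HL. unfold Sn.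
  set (s := length sigma). set (c := (/2)^(L - s)).
  assert (Hs : (/2)^s <> 0) by (apply pow_nonzero; lra).
  transitivity (sumR (all_strings N) (fun tau => c * sumR (all_strings L)
      (fun rho => indic (ext (Xl rho) sigma) * (b tau * indic (ext (Phi (Xl rho)) tau))))).
  - apply sumR_ext_in. intros tau Htau. apply in_all_strings_length in Htau.
    unfold Qm. rewrite msig_val. fold s.
    assert (HA : det_at L (fun X => ext X sigma /\ ext (Phi X) tau)).
    { intros X Y E [HX1 HX2]; split; [apply (ext_restr_eq X Y sigma L); auto |].
      intros i Hi; rewrite (detN_eq Phi h Hh N L X Y i); auto; lia. }
    rewrite (mu_det L _ HA), (inner_formula L _ HA).
    rewrite (pow_half_split L s) by auto. fold c.
    transitivity (c * (b tau * sumR (all_strings L) (fun rho => indic (ext (Xl rho) sigma /\ ext (Phi (Xl rho)) tau)))).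
    field; auto.
    f_equal. rewrite <- sumR_scal. apply sumR_ext_in. intros rho _. rewrite indic_and. ring.
  - rewrite sumR_scal. f_equal. rewrite sumR_swap. apply sumR_ext_in. intros rho _.
    rewrite <- (sum_ext_unique N b (Phi (Xl rho))). rewrite <- sumR_scal.
    apply sumR_ext_in. intros tau _. ring.
Qed.

Lemma Q_G sigma N tau : sepP Phi sigma N -> (N <= length tau)%nat ->
  Qm sigma tau = indic (exists X, ext X sigma /\ ext (Phi X) (firstn N tau)) * mu (preim Phi tau).
Proof.
  intros HS HN. unfold Qm.
  destruct (classic (exists X, ext X sigma /\ ext (Phi X) (firstn N tau))) as [[X0 [H1 H2]]|HG].
  - rewrite indic_T by eauto. rewrite Rmult_1_l. apply mu_ext. intros X. unfold preim. split.
    tauto. intros HX. split; auto. apply NNPP. intros HXs.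
    destruct (HS X0 X H1 HXs) as [m [Hm Hne]]. apply Hne.
    rewrite H2 by (rewrite length_firstn; lia). rewrite HX by lia.
    rewrite nth_firstn. destruct (Nat.ltb_spec m N); auto; lia.
  - rewrite indic_F by auto. rewrite Rmult_0_l. rewrite <- mu_empty. apply mu_ext. intros X.
    split; [|tauto]. intros [H1 H2]. apply HG. exists X. split; auto.
    intros i Hi. rewrite length_firstn in Hi. rewrite nth_firstn.
    destruct (Nat.ltb_spec i N); try lia. apply H2. lia.
Qed.

Lemma const_step sigma N M : sepP Phi sigma N -> (N <= M)%nat -> Sn (S M) sigma = Sn M sigma.
Proof.
  intros HS HM. unfold Sn. rewrite sumR_split. apply sumR_ext_in. intros tau Htau.
  apply in_all_strings_length in Htau.
  rewrite !(Q_G sigma N) by (auto; rewrite ?length_app; simpl; lia).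
  assert (E : forall c, firstn N (tau ++ [c]) = firstn N tau).
  { intros c. rewrite firstn_app. replace (N - length tau)%nat with 0%nat by lia. simpl. apply app_nil_r. }
  rewrite !E. destruct Hb as [_ Hm]. specialize (Hm tau).
  set (i := indic _). set (ms := msig sigma).
  set (p0 := mu (preim Phi (tau ++ [false]))) in *. set (p1 := mu (preim Phi (tau ++ [true]))) in *.
  set (p := mu (preim Phi tau)) in *.
  transitivity (i * (b (tau ++ [false]) * p0 + b (tau ++ [true]) * p1) / ms).
  unfold Rdiv; ring. rewrite <- Hm. unfold Rdiv; ring.
Qed.

Lemma const sigma N M : sepP Phi sigma N -> (N <= M)%nat -> Sn M sigma = Sn N sigma.
Proof.
  intros HS HM. induction HM. auto. rewrite (const_step sigma N m); auto.
Qed.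

Definition Nsep sigma := epsilon (inhabits 0%nat) (fun N => sepP Phi sigma N).

Lemma Nsep_spec sigma : sepP Phi sigma (Nsep sigma).
Proof.
  unfold Nsep. apply epsilon_spec. apply (K2 Phi h Hh Hinj).
Qed.

Definition bp sigma := Sn (Nsep sigma) sigma.

Lemma bp_eq sigma N : sepP Phi sigma N -> Sn N sigma = bp sigma.
Proof.
  intros HS. unfold bp. rewrite <- (const sigma N (Nat.max N (Nsep sigma))) by (auto; lia).
  apply const. apply Nsep_spec. lia.
Qed.

Lemma bp_formula sigma N L : sepP Phi sigma N -> detN h N L -> (length sigma <= L)%nat ->
  bp sigma = (/2)^(L - length sigma) *
    sumR (all_strings L) (fun rho => indic (ext (Xl rho) sigma) * b (restr (Phi (Xl rho)) N)).
Proof. intros. rewrite <- (bp_eq sigma N); auto. apply formula; auto. Qed.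

Lemma bp_cv sigma : Un_cv (fun n => Sn n sigma) (bp sigma).
Proof.
  intros eps Heps. exists (Nsep sigma). intros n Hn. rewrite bp_eq.
  unfold R_dist. rewrite Rminus_diag, Rabs_R0. auto.
  apply (sepP_mono Phi sigma (Nsep sigma)); auto. apply Nsep_spec.
Qed.

Lemma bp_mart : martingale bp.
Proof.
  destruct Hb as [Hb0 _].
  set (f := fun sigma => (fun N => exists L, sepP Phi sigma N /\ detN h N L /\ (length sigma + 1 <= L)%nat)).
  assert (Hex : forall sigma, exists N L, sepP Phi sigma N /\ sepP Phi (sigma ++ [false]) N /\
     sepP Phi (sigma ++ [true]) N /\ detN h N L /\ (length sigma + 1 <= L)%nat).
  { intros sigma. set (N := Nat.max (Nsep sigma) (Nat.max (Nsep (sigma ++ [false])) (Nsep (sigma ++ [true])))).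
    destruct (K1N Phi h Hh N) as [L HL]. exists N, (Nat.max L (length sigma + 1)).
    repeat split.
    - apply (sepP_mono _ _ (Nsep sigma)). apply Nsep_spec. unfold N; lia.
    - apply (sepP_mono _ _ (Nsep (sigma ++ [false]))). apply Nsep_spec. unfold N; lia.
    - apply (sepP_mono _ _ (Nsep (sigma ++ [true]))). apply Nsep_spec. unfold N; lia.
    - apply (detN_mono h N L); auto; lia.
    - lia. }
  split.
  - intros sigma. destruct (Hex sigma) as [N [L [H1 [_ [_ [H4 H5]]]]]].
    rewrite (bp_formula sigma N L) by (auto; lia).
    apply Rmult_le_pos. apply pow_le; lra.
    assert (0 <= sumR (all_strings L) (fun _ => 0)).
    { clear; induction (all_strings L); simpl; lra. }
    eapply Rle_trans. apply H. apply sumR_le. intros x _.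
    apply Rmult_le_pos. apply indic_bounds. apply Hb0.
  - intros sigma. destruct (Hex sigma) as [N [L [H1 [H2 [H3 [H4 H5]]]]]].
    rewrite (bp_formula sigma N L), (bp_formula (sigma ++ [false]) N L), (bp_formula (sigma ++ [true]) N L)
      by (auto; rewrite ?length_app; simpl; lia).
    rewrite !length_app. simpl length.
    replace (L - length sigma)%nat with (S (L - (length sigma + 1)))%nat by lia.
    simpl pow.
    transitivity ((/ 2) ^ (L - (length sigma + 1)) * sumR (all_strings L)
         (fun rho => indic (ext (Xl rho) sigma) * b (restr (Phi (Xl rho)) N))).
    2: field.
    rewrite <- Rmult_plus_distr_l, <- sumR_plus.
    f_equal. apply sumR_ext_in. intros rho Hrho. apply in_all_strings_length in Hrho.
    rewrite (indic_iff _ _ (ext_app_iff (Xl rho) sigma false)).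
    rewrite (indic_iff _ _ (ext_app_iff (Xl rho) sigma true)). rewrite !indic_and.
    destruct (Xl rho (length sigma)).
    + rewrite (indic_F (true = false)), (indic_T (true = true)) by congruence. ring.
    + rewrite (indic_F (false = true)), (indic_T (false = false)) by congruence. ring.
Qed.

End P2.

End Part_Phi2.
Import Part_Phi2.

Module Part_Link.
Local Open Scope nat_scope.

Lemma nsum_zero n f : nsum n f = 0 <-> forall i, i < n -> f i = 0.
Proof.
  induction n; simpl. split; intros; auto; lia.
  split.
  - intros H i Hi. destruct (Nat.eq_dec i n). subst; lia. apply IHn. lia. lia.
  - intros H. rewrite (proj2 IHn). rewrite H; auto. intros; apply H; lia.
Qed.

Lemma nsum_nz n f : nsum n f <> 0 -> exists i, i < n /\ f i <> 0.
Proof.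
  intros H. apply NNPP. intros H2. apply H. apply nsum_zero. intros i Hi.
  apply NNPP. intros H3. apply H2. eauto.
Qed.

Lemma nsum_ext_lt n f g : (forall i, i < n -> f i = g i) -> nsum n f = nsum n g.
Proof. induction n; simpl; auto. intros H. rewrite IHn, H; auto. Qed.

Lemma nsum_front n f : nsum (S n) f = f 0 + nsum n (fun i => f (S i)).
Proof. induction n; simpl in *. lia. rewrite IHn. lia. Qed.

Lemma nsum_scal n c f : nsum n (fun i => c * f i) = c * nsum n f.
Proof. induction n; simpl; auto. rewrite IHn. lia. Qed.

Lemma enc_restr_sum Y N : enc_bits (restr Y N) = nsum N (fun m => b2 (Y m) * 2 ^ m) + 2 ^ N - 1.
Proof.
  revert Y; induction N; intros Y. reflexivity.
  rewrite restr_S. simpl enc_bits. rewrite IHN. rewrite nsum_front.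
  replace (nsum N (fun i => b2 (Y (S i)) * 2 ^ S i)) with (2 * nsum N (fun i => b2 (Y (S i)) * 2 ^ i)).
  2: { rewrite <- nsum_scal. apply nsum_ext_lt. intros. rewrite Nat.pow_succ_r'. ring. }
  pose proof (pow2_pos N). rewrite Nat.pow_0_r, Nat.pow_succ_r'. destruct (Y 0); simpl b2; lia.
Qed.

Section L.
Variable Phi : cantor -> cantor.
Variable h : nat -> nat.
Hypothesis Hh : forall (X : cantor) (m : nat),
  (exists n, h (npair (enc_bits (restr X n)) m) <> 2) /\
  (forall n, h (npair (enc_bits (restr X n)) m) <> 2 ->
             h (npair (enc_bits (restr X n)) m) = (if Phi X m then 1 else 0)).
Hypothesis Hinj : injective_cantor Phi.

Lemma Hq_restr X L r n m : ext X (bits L r) -> n <= L ->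
  Hq h n r m = h (npair (enc_bits (restr X n)) m).
Proof.
  intros HX Hn. unfold Hq. rewrite (ext_firstn X (bits L r) n HX) by (rewrite bits_length; auto).
  rewrite firstn_bits, enc_bits_bits by auto. reflexivity.
Qed.

Definition rX X L := enc_bits (restr X L) + 1 - 2 ^ L.

Lemma rX_spec X L : rX X L < 2 ^ L /\ ext X (bits L (rX X L)).
Proof.
  unfold rX. pose proof (enc_bound (restr X L)) as [B1 B2]. rewrite restr_length in B1, B2.
  split. simpl in B2. lia.
  pose proof (bits_enc (restr X L)) as E. rewrite restr_length in E. rewrite E. apply ext_restr.
Qed.

Lemma ext_bits_sig X L r sigma : length sigma <= L -> ext X (bits L r) ->
  (ext X sigma <-> r mod 2 ^ length sigma = enc_bits sigma + 1 - 2 ^ length sigma).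
Proof.
  intros HL HX. rewrite ext_restr_iff.
  rewrite (ext_firstn X (bits L r)) by (rewrite ?bits_length; auto).
  rewrite firstn_bits by auto.
  pose proof (enc_bound sigma) as [B1 B2]. pose proof (pow2_pos (length sigma)).
  split.
  - intros E. apply (f_equal enc_bits) in E. rewrite enc_bits_bits in E. lia.
  - intros E. apply enc_inj. rewrite enc_bits_bits. lia.
Qed.

Lemma det_iff L r m : det h L r m <> 0 <-> exists n, n <= L /\ Hq h n r m <> 2.
Proof.
  unfold det, isz. split.
  - intros H. destruct (nsum_nz (S L) (fun n => neq (Hq h n r m) 2)) as [n [Hn1 Hn2]]. lia.
    exists n. split. lia. rewrite neq_eq in Hn2. destruct (Nat.eqb_spec (Hq h n r m) 2); auto; lia.
  - intros [n [Hn1 Hn2]]. enough (nsum (S L) (fun n => neq (Hq h n r m) 2) <> 0) by lia.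
    intros E. rewrite nsum_zero in E. specialize (E n ltac:(lia)). rewrite neq_eq in E.
    destruct (Nat.eqb_spec (Hq h n r m) 2); auto. lia.
Qed.

Lemma bitv_val L r m X : (exists n, n <= L /\ Hq h n r m <> 2) -> ext X (bits L r) ->
  bitv h L r m = b2 (Phi X m).
Proof.
  intros [n1 [Hn1 Hq1]] HX. unfold bitv, n0.
  set (P := fun n => eqn (Hq h n r m) 2 * (L - n)).
  destruct (minz_spec P) as [A B]. exists L. unfold P. rewrite Nat.sub_diag. lia.
  fold (minz P) in *. set (n0 := minz P) in *.
  assert (P1 : P n1 = 0). { unfold P. rewrite eqn_eq. destruct (Nat.eqb_spec (Hq h n1 r m) 2); try lia. }
  assert (Hle : n0 <= n1). { destruct (Nat.le_gt_cases n0 n1); auto. exfalso. eapply B; eauto. }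
  assert (Hq0 : Hq h n0 r m <> 2).
  { intros E. unfold P in A. rewrite eqn_eq, E in A. simpl in A.
    assert (n0 = n1) by lia. subst. auto. }
  rewrite (Hq_restr X L) in * by (auto; lia). apply (hval2 Phi h Hh); auto.
Qed.

Lemma outc_val N L r X : detN h N L -> ext X (bits L r) ->
  outc h L N r = enc_bits (restr (Phi X) N).
Proof.
  intros HD HX. unfold outc. rewrite enc_restr_sum. f_equal. f_equal.
  apply nsum_ext_lt. intros m Hm. f_equal. apply bitv_val; auto.
  destruct (HD X m Hm) as [n [Hn1 Hn2]]. exists n. split; auto. rewrite (Hq_restr X L); auto.
Qed.

Lemma valid_sem sigma N L :
  Vv h (length sigma) (enc_bits sigma + 1 - 2 ^ length sigma) N L = 0 ->
  detN h N L /\ sepP Phi sigma N /\ length sigma <= L.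
Proof.
  intros HV. unfold Vv in HV.
  assert (HL : length sigma <= L) by lia.
  assert (HD : detN h N L).
  { intros X m Hm. destruct (rX_spec X L) as [R1 R2].
    assert (E : bad1 h L N = 0) by lia. unfold bad1 in E. rewrite nsum_zero in E.
    specialize (E _ R1). rewrite nsum_zero in E. specialize (E m Hm). unfold isz in E.
    destruct (proj1 (det_iff L (rX X L) m)) as [n [Hn1 Hn2]]. lia.
    exists n. split; auto. rewrite <- (Hq_restr X L (rX X L)); auto. }
  repeat split; auto.
  intros X Y HX HY. destruct (rX_spec X L) as [R1 R2]. destruct (rX_spec Y L) as [R3 R4].
  assert (E : bad2 h (length sigma) (enc_bits sigma + 1 - 2 ^ length sigma) L N = 0) by lia.
  unfold bad2 in E. rewrite nsum_zero in E. specialize (E _ R1). rewrite nsum_zero in E.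
  specialize (E _ R3). cbv beta in E.
  rewrite (proj1 (ext_bits_sig X L _ sigma HL R2) HX) in E.
  rewrite eqn_eq, Nat.eqb_refl in E.
  rewrite neq_eq in E. destruct (Nat.eqb_spec (rX Y L mod 2 ^ length sigma) (enc_bits sigma + 1 - 2 ^ length sigma)) as [E2|E2].
  { exfalso. apply HY. apply (ext_bits_sig Y L _ sigma HL R4). auto. }
  unfold agree, isz in E.
  destruct (nsum_nz N (fun m => neq (bitv h L (rX X L) m) (bitv h L (rX Y L) m))) as [m [Hm1 Hm2]]. lia.
  exists m. split; auto. intros Eq. apply Hm2. rewrite neq_eq.
  rewrite (bitv_val L _ m X), (bitv_val L _ m Y), Eq, Nat.eqb_refl; auto.
  all: first [ destruct (HD Y m Hm1) as [n [Hn1 Hn2]]; exists n; split; auto; rewrite (Hq_restr Y L); auto; fail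
             | destruct (HD X m Hm1) as [n [Hn1 Hn2]]; exists n; split; auto; rewrite (Hq_restr X L); auto ].
Qed.

Lemma w0tot : forall s rs, exists w, Vv h s rs (ua w) (ub w) = 0.
Proof.
  intros s rs. destruct (Nat.lt_ge_cases rs (2 ^ s)) as [Hrs|Hrs].
  - set (sigma := bits s rs).
    assert (Hl : length sigma = s) by apply bits_length.
    assert (Hrs' : enc_bits sigma + 1 - 2 ^ length sigma = rs).
    { rewrite Hl. unfold sigma. rewrite enc_bits_bits, Nat.mod_small by auto. pose proof (pow2_pos s). lia. }
    destruct (K2 Phi h Hh Hinj sigma) as [N HN]. destruct (K1N Phi h Hh N) as [L0 HL0].
    set (L := Nat.max L0 s). exists (npair N L). rewrite ua_npair, ub_npair. unfold Vv.
    assert (HD : detN h N L) by (apply (detN_mono h N L0); auto; unfold L; lia).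
    assert (Hdet : forall r m, r < 2 ^ L -> m < N -> exists n, n <= L /\ Hq h n r m <> 2).
    { intros r m Hr Hm. destruct (HD (Xl (bits L r)) m Hm) as [n [Hn1 Hn2]]. exists n. split; auto.
      rewrite (Hq_restr (Xl (bits L r)) L); auto. apply ext_Xl. }
    assert (B1 : bad1 h L N = 0).
    { unfold bad1. apply nsum_zero. intros r Hr. apply nsum_zero. intros m Hm. unfold isz.
      pose proof (proj2 (det_iff L r m) (Hdet r m Hr Hm)). lia. }
    assert (B2 : bad2 h s rs L N = 0).
    { unfold bad2. apply nsum_zero. intros r Hr. apply nsum_zero. intros r' Hr'.
      rewrite eqn_eq, neq_eq.
      destruct (Nat.eqb_spec (r mod 2 ^ s) rs) as [E1|E1]; [|lia].
      destruct (Nat.eqb_spec (r' mod 2 ^ s) rs) as [E2|E2]; [lia|].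
      assert (HX : ext (Xl (bits L r)) sigma).
      { apply (ext_bits_sig _ L r sigma). lia. apply ext_Xl. rewrite Hrs', Hl. auto. }
      assert (HY : ~ ext (Xl (bits L r')) sigma).
      { intros HY. apply (ext_bits_sig _ L r' sigma) in HY. rewrite Hrs', Hl in HY. auto. lia. apply ext_Xl. }
      destruct (HN _ _ HX HY) as [m [Hm Hne]].
      unfold agree, isz. enough (nsum N (fun m => neq (bitv h L r m) (bitv h L r' m)) <> 0) by lia.
      intros Z. rewrite nsum_zero in Z. specialize (Z m Hm). rewrite neq_eq in Z.
      rewrite (bitv_val L r m (Xl (bits L r))), (bitv_val L r' m (Xl (bits L r'))) in Z; auto using ext_Xl.
      destruct (Nat.eqb_spec (b2 (Phi (Xl (bits L r)) m)) (b2 (Phi (Xl (bits L r')) m))) as [E|E]; try lia.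
      apply b2_inj in E. auto. }
    rewrite B1, B2. unfold L. lia.
  - exists (npair 0 s). rewrite ua_npair, ub_npair. unfold Vv, bad1, bad2.
    rewrite Nat.sub_diag. simpl.
    enough (nsum (2 ^ s) (fun r => nsum (2 ^ s) (fun r' => eqn (r mod 2 ^ s) rs * neq (r' mod 2 ^ s) rs * agree h s 0 r r')) = 0).
    { assert (nsum (2 ^ s) (fun _ => 0) = 0) by (apply nsum_zero; auto). lia. }
    apply nsum_zero. intros r _. apply nsum_zero. intros r' _. rewrite eqn_eq.
    pose proof (Nat.mod_upper_bound r (2 ^ s) ltac:(pose proof (pow2_pos s); lia)).
    destruct (Nat.eqb_spec (r mod 2 ^ s) rs); try lia.
Qed.

Lemma slen_enc sigma : slen (enc_bits sigma) = length sigma.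
Proof.
  unfold slen. pose proof (enc_bound sigma) as [B1 B2]. apply minz_unique. lia.
  intros m Hm. pose proof (Nat.pow_le_mono_r 2 (S m) (length sigma) ltac:(lia) ltac:(lia)). lia.
Qed.

End L.

End Part_Link.
Import Part_Link.

Module Part_Final.
Local Open Scope R_scope.

Lemma INR_nsum n f : INR (nsum n f) = sumR (seq 0 n) (fun i => INR (f i)).
Proof.
  induction n. simpl; auto. rewrite seq_S, sumR_app. simpl nsum. rewrite plus_INR, IHn. simpl. ring.
Qed.

Lemma INR2 : INR 2 = 2.
Proof. simpl. ring. Qed.

Lemma round_key d M : (0 < M)%nat ->
  Rabs (INR d / (2 * INR M) - INR ((d + M) / (2 * M))) <= / 2.
Proof.
  intros HM. assert (HM' : 0 < INR M) by (apply lt_0_INR; auto).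
  set (q := ((d + M) / (2*M))%nat).
  pose proof (Nat.div_mod (d + M) (2*M) ltac:(lia)) as D.
  pose proof (Nat.mod_upper_bound (d+M) (2*M) ltac:(lia)) as U.
  fold q in D. set (rr := ((d + M) mod (2*M))%nat) in *.
  assert (E1 : INR d + INR M = 2 * INR M * INR q + INR rr).
  { rewrite <- plus_INR, D, plus_INR, !mult_INR, INR2. ring. }
  assert (E2 : INR rr < 2 * INR M). { apply lt_INR in U. rewrite mult_INR, INR2 in U. lra. }
  assert (E3 : 0 <= INR rr) by apply pos_INR.
  replace (INR d / (2 * INR M) - INR q) with ((INR rr - INR M) * / (2 * INR M)).
  2: { replace (INR d) with (2 * INR M * INR q + INR rr - INR M) by lra. field; lra. }
  assert (Hi : 0 < / (2 * INR M)) by (apply Rinv_0_lt_compat; lra).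
  apply Rabs_le. split.
  - replace (- / 2) with (- INR M * / (2 * INR M)) by (field; lra).
    apply Rmult_le_compat_r; lra.
  - replace (/ 2) with (INR M * / (2 * INR M)) by (field; lra).
    apply Rmult_le_compat_r; lra.
Qed.

Lemma round_lemma x y M : (0 < M)%nat ->
  Rabs ((INR x - INR y) / (2 * INR M) - (INR ((x - y + M) / (2 * M)) - INR ((y - x + M) / (2 * M)))) <= / 2.
Proof.
  intros HM.
  assert (Z : (M / (2 * M) = 0)%nat) by (apply Nat.div_small; lia).
  destruct (Nat.le_gt_cases y x).
  - replace (y - x + M)%nat with M by lia. rewrite Z. change (INR 0) with 0.
    rewrite <- minus_INR by auto. rewrite Rminus_0_r. apply round_key; auto.
  - replace (x - y + M)%nat with M by lia. rewrite Z. change (INR 0) with 0.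
    replace (INR x - INR y) with (- INR (y - x)) by (rewrite minus_INR by lia; ring).
    replace (- INR (y - x) / (2 * INR M) - (0 - INR ((y - x + M) / (2 * M))))
      with (- (INR (y - x) / (2 * INR M) - INR ((y - x + M) / (2 * M)))) by (unfold Rdiv; ring).
    rewrite Rabs_Ropp. apply round_key; auto.
Qed.

Lemma sumR_nonneg {A} (l : list A) f : (forall x, 0 <= f x) -> 0 <= sumR l f.
Proof. induction l; simpl; intros H. lra. pose proof (H a). specialize (IHl H). lra. Qed.

Lemma sumR_lin {T} (l : list T) f g h c :
  sumR l (fun r => f r - (g r - h r) * c) = sumR l f - (sumR l g - sumR l h) * c.
Proof. induction l; simpl. ring. rewrite IHl. ring. Qed.

Lemma final_ineq (l : list nat) (E be : nat -> R) (A C : nat -> nat) (W : R) (Mm k SA SC : nat) :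
  (forall r, 0 <= E r) ->
  (forall r, Rabs (be r - (INR (A r) - INR (C r)) / 2 ^ S k) <= (/2) ^ S k) ->
  INR SA = sumR l (fun r => E r * INR (A r)) -> INR SC = sumR l (fun r => E r * INR (C r)) ->
  sumR l E = INR Mm -> W * INR Mm = 1 -> (0 < Mm)%nat ->
  Rabs (W * sumR l (fun r => E r * be r) -
        (INR ((SA - SC + Mm) / (2 * Mm)) - INR ((SC - SA + Mm) / (2 * Mm))) / 2 ^ k) <= (/2) ^ k.
Proof.
  intros HE Hbe HSA HSC Hcnt HW HM.
  assert (HM' : 0 < INR Mm) by (apply lt_0_INR; auto).
  assert (H2k : 0 < 2 ^ k) by (apply pow_lt; lra).
  set (V := (INR SA - INR SC) / (2 * INR Mm) / 2 ^ k).
  assert (S1 : W * sumR l (fun r => E r * be r) - V =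
               W * sumR l (fun r => E r * (be r - (INR (A r) - INR (C r)) / 2 ^ S k))).
  { unfold V. rewrite HSA, HSC.
    rewrite (sumR_ext_in l (fun r => E r * (be r - (INR (A r) - INR (C r)) / 2 ^ S k)) (fun r => E r * be r - (E r * INR (A r) - E r * INR (C r)) * / 2 ^ S k))
      by (intros; unfold Rdiv; ring).
    rewrite sumR_lin.
    assert (W = / INR Mm) by (apply (Rmult_eq_reg_r (INR Mm)); [rewrite Rinv_l|]; lra).
    subst W. simpl. field. lra. }
  assert (B1 : Rabs (W * sumR l (fun r => E r * be r) - V) <= (/2) ^ S k).
  { rewrite S1. assert (HW0 : 0 <= W).
    { destruct (Rle_lt_dec 0 W); auto. nra. }
    rewrite Rabs_mult, (Rabs_right W) by lra.
    eapply Rle_trans. apply Rmult_le_compat_l. auto. apply sumR_abs.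
    eapply Rle_trans. apply Rmult_le_compat_l. auto.
    apply (sumR_le _ _ (fun r => E r * (/2) ^ S k)). intros r _.
    rewrite Rabs_mult, Rabs_right by (apply Rle_ge; auto). apply Rmult_le_compat_l; auto.
    rewrite (Rmult_comm W). rewrite sumR_ext_in with (g := fun r => (/2) ^ S k * E r) by (intros; ring).
    rewrite sumR_scal, Hcnt, Rmult_assoc, (Rmult_comm (INR Mm)), HW. lra. }
  assert (B2 : Rabs (V - (INR ((SA - SC + Mm) / (2 * Mm)) - INR ((SC - SA + Mm) / (2 * Mm))) / 2 ^ k) <= (/2) ^ S k).
  { unfold V. unfold Rdiv at 1 3. rewrite <- Rmult_minus_distr_r.
    rewrite Rabs_mult, (Rabs_right (/ 2 ^ k)) by (apply Rle_ge, Rlt_le, Rinv_0_lt_compat; auto).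
    rewrite <- pow_inv. simpl pow. apply Rmult_le_compat_r. apply pow_le; lra.
    apply round_lemma; auto. }
  eapply Rle_trans. 
  replace (W * sumR l (fun r => E r * be r) - (INR ((SA - SC + Mm) / (2 * Mm)) - INR ((SC - SA + Mm) / (2 * Mm))) / 2 ^ k)
    with ((W * sumR l (fun r => E r * be r) - V) + (V - (INR ((SA - SC + Mm) / (2 * Mm)) - INR ((SC - SA + Mm) / (2 * Mm))) / 2 ^ k)) by ring.
  apply Rabs_triang. simpl pow in *. lra.
Qed.

End Part_Final.
Import Part_Final.

Module Part_Main.
Local Open Scope R_scope.

Section M.
Variable Phi : cantor -> cantor.
Variable b : list bool -> R.
Variable h g : nat -> nat.
Hypothesis Hh : forall (X : cantor) (m : nat),
  (exists n, h (npair (enc_bits (restr X n)) m) <> 2%nat) /\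
  (forall n, h (npair (enc_bits (restr X n)) m) <> 2%nat ->
             h (npair (enc_bits (restr X n)) m) = (if Phi X m then 1 else 0)%nat).
Hypothesis Hinj : injective_cantor Phi.
Hypothesis Hb : Phi_martingale Phi b.
Hypothesis Hg : forall (tau : list bool) (k : nat),
        exists a c : nat,
          g (npair (enc_bits tau) k) = npair a c /\
          Rabs (b tau - (INR a - INR c) / 2 ^ k) <= (/ 2) ^ k.

Lemma Gp_bound sigma k : exists a c, Gp h g (npair (enc_bits sigma) k) = npair a c /\
   Rabs (bp Phi b sigma - (INR a - INR c) / 2 ^ k) <= (/2) ^ k.
Proof.
  unfold Gp. rewrite ua_npair, ub_npair, slen_enc.
  assert (Hrs : rsig (enc_bits sigma) = (enc_bits sigma + 1 - 2 ^ length sigma)%nat).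
  { unfold rsig. rewrite slen_enc. auto. }
  rewrite Hrs. set (s := length sigma) in *. set (rs := (enc_bits sigma + 1 - 2 ^ s)%nat) in *.
  set (w := w0 h s rs).
  assert (HV : Vv h s rs (ua w) (ub w) = 0%nat).
  { exact (proj1 (minz_spec (fun w => Vv h s rs (ua w) (ub w)) (w0tot Phi h Hh Hinj s rs))). }
  set (N := ua w) in *. set (L := ub w) in *.
  destruct (valid_sem Phi h Hh sigma N L HV) as [HD [HS HL]]. fold s in HL.
  unfold fin. eexists; eexists; split; [reflexivity|].
  rewrite (bp_formula Phi h b Hh Hinj Hb sigma N L HS HD HL).
  rewrite all_strings_bits, sumR_map. fold s.
  assert (F1 : forall r, indic (ext (Xl (bits L r)) sigma) = INR (eqn (r mod 2 ^ s) rs)).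
  { intros r. rewrite eqn_eq. destruct (Nat.eqb_spec (r mod 2 ^ s) rs) as [E|E].
    - apply indic_T. apply (ext_bits_sig (Xl (bits L r)) L r sigma HL (ext_Xl _)). auto.
    - apply indic_F. intros X. apply E. apply (ext_bits_sig (Xl (bits L r)) L r sigma HL (ext_Xl _)). auto. }
  rewrite (sumR_ext_in _ _ (fun r => INR (eqn (r mod 2 ^ s) rs) * b (restr (Phi (Xl (bits L r))) N)))
    by (intros; rewrite F1; auto).
  apply (final_ineq (seq 0 (2 ^ L)) (fun r => INR (eqn (r mod 2 ^ s) rs)) (fun r => b (restr (Phi (Xl (bits L r))) N))
           (fun r => ua (g (npair (outc h L N r) (S k)))) (fun r => ub (g (npair (outc h L N r) (S k))))).
  - intros; apply pos_INR.
  - intros r. rewrite (outc_val Phi h Hh N L r (Xl (bits L r)) HD (ext_Xl _)).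
    destruct (Hg (restr (Phi (Xl (bits L r))) N) (S k)) as [a [c [E B]]].
    rewrite E, ua_npair, ub_npair. auto.
  - unfold SA. rewrite INR_nsum. apply sumR_ext_in. intros; apply mult_INR.
  - unfold SC. rewrite INR_nsum. apply sumR_ext_in. intros; apply mult_INR.
  - rewrite pow_INR, INR2. unfold s. rewrite <- (count_ext sigma L HL). rewrite all_strings_bits, sumR_map.
    apply sumR_ext_in. intros; rewrite F1; auto.
  - rewrite pow_INR, INR2, <- Rpow_mult_distr. rewrite Rinv_l by lra. apply pow1.
  - apply pow2_pos.
Qed.

End M.


End Part_Main.
Import Part_Main.

Open Scope R_scope.
Theorem lemmaL3 (Phi : cantor -> cantor) (b : list bool -> R)
  (HPhi : computable_functional Phi) (Hinj : injective_cantor Phi)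
  (Hb : Phi_martingale Phi b) (Hbc : computable_real_fun b) :
  exists b' : list bool -> R,
    (forall sigma : list bool,
        Un_cv (fun n : nat =>
                 sumR (all_strings n)
                   (fun tau => b tau *
                      (mu (fun X => ext X sigma /\ ext (Phi X) tau)
                       / mu (fun X => ext X sigma))))
              (b' sigma)) /\
    martingale b' /\ computable_real_fun b'.
Proof.
  destruct HPhi as [h [hc Hh]]. destruct Hbc as [g [gc Hg]].
  exists (bp Phi b). split; [|split].
  - intros sigma. exact (bp_cv Phi h b Hh Hinj Hb sigma).
  - exact (bp_mart Phi h b Hh Hinj Hb).
  - exists (Gp h g). split.
    + apply Gp_computable; auto. apply (w0tot Phi h Hh Hinj).
    + intros tau k. apply (Gp_bound Phi b h g Hh Hinj Hb Hg).
Qed.
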